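(* A linear functional $\phi$ on $ba(\mathcal A)$ is norm continuous if and only if there is a uniformly bounded net $(f_\alpha)_{\alpha\in\mathfrak A}$ in $\mathcal S(\mathcal A)$ which is Cauchy in $L^1(\mu)$ for every $\mu\in ba(\mathcal A)$, with $\limsup_\alpha\|f_\alpha\|_\infty=\|\phi\|$, such that $\phi(\mu)=\lim_\alpha\mu(f_\alpha)$ for all $\mu\in ba(\mathcal A)$.
   Context: $\mathcal A$ algebra of subsets of $\Omega$; $ba(\mathcal A)$ the Banach space of bounded finitely additive real set functions with $\|\mu\|=|\mu|(\Omega)$. $\mathcal S(\mathcal A)$ the $\mathcal A$-simple functions with sup norm; $\mu(f)=\int f\,d\mu$. A net $(f_\alpha)$ of simple functions is Cauchy in $L^1(\mu)$ if for every $\varepsilon>0$ there is $\alpha_0$ with $|\mu|(|f_{\alpha_1}-f_{\alpha_2}|)<\varepsilon$ for all $\alpha_1,\alpha_2\ge\alpha_0$. *)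

(* Defs.v *)
From Stdlib Require Import Reals List Classical ClassicalEpsilon.
Open Scope R_scope.
Set Implicit Arguments.

Section BA.
Variable Omega : Type.

Definition full : Omega -> Prop := fun _ => True.
Definition empty_set_ : Omega -> Prop := fun _ => False.
Definition disjoint (E F : Omega -> Prop) := forall x, ~ (E x /\ F x).
Definition union (E F : Omega -> Prop) := fun x => E x \/ F x.
Definition compl (E : Omega -> Prop) := fun x => ~ E x.

Definition algebra (A : (Omega -> Prop) -> Prop) : Prop :=
  A full /\ (forall E, A E -> A (compl E)) /\
  (forall E F, A E -> A F -> A (union E F)).

(* bounded finitely additive real set functions on A; an element of ba(A) is
   represented by its extension by 0 outside A (so representation is unique) *)
Definition ba (A : (Omega -> Prop) -> Prop) (mu : (Omega -> Prop) -> R) : Prop :=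
  (forall E F, A E -> A F -> disjoint E F -> mu (union E F) = mu E + mu F) /\
  (exists M, forall E, A E -> Rabs (mu E) <= M) /\
  (forall E, ~ A E -> mu E = 0).

Definition pairwise_disjoint (l : list (Omega -> Prop)) : Prop :=
  forall i j, (i < j)%nat -> (j < length l)%nat ->
    disjoint (nth i l empty_set_) (nth j l empty_set_).

Definition sumabs (mu : (Omega -> Prop) -> R) (l : list (Omega -> Prop)) : R :=
  fold_right (fun S acc => Rabs (mu S) + acc) 0 l.

Definition tv (A : (Omega -> Prop) -> Prop) (mu : (Omega -> Prop) -> R)
  (E : Omega -> Prop) : R :=
  epsilon (inhabits 0) (fun s => is_lub (fun r => exists l,
     Forall A l /\ Forall (fun S => forall x, S x -> E x) l /\
     pairwise_disjoint l /\ r = sumabs mu l) s).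

Definition ba_norm A mu := tv A mu full.

Definition simple (A : (Omega -> Prop) -> Prop) (f : Omega -> R) : Prop :=
  (exists l : list R, forall x, In (f x) l) /\
  (forall y, A (fun x => f x = y)).

Definition integ (mu : (Omega -> Prop) -> R) (f : Omega -> R) : R :=
  let l := epsilon (inhabits nil)
             (fun l : list R => NoDup l /\ forall x, In (f x) l) in
  fold_right (fun y acc => y * mu (fun x => f x = y) + acc) 0 l.

(* sup norm (sup of {0} u {|f x|}, so that it is 0 on an empty Omega) *)
Definition supnorm (f : Omega -> R) : R :=
  epsilon (inhabits 0) (fun s => is_lub (fun r => r = 0 \/ exists x, r = Rabs (f x)) s).

Definition linear_on_ba A (phi : ((Omega -> Prop) -> R) -> R) : Prop :=
  forall mu nu a b, ba A mu -> ba A nu ->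
    phi (fun E => a * mu E + b * nu E) = a * phi mu + b * phi nu.

Definition norm_continuous A (phi : ((Omega -> Prop) -> R) -> R) : Prop :=
  forall mu, ba A mu -> forall eps, eps > 0 -> exists delta, delta > 0 /\
    forall nu, ba A nu -> ba_norm A (fun E => nu E - mu E) < delta ->
      Rabs (phi nu - phi mu) < eps.

Definition opnorm A (phi : ((Omega -> Prop) -> R) -> R) : R :=
  epsilon (inhabits 0) (fun s => is_lub (fun r => exists mu,
     ba A mu /\ ba_norm A mu <= 1 /\ r = Rabs (phi mu)) s).

End BA.

Definition directed (D : Type) (le : D -> D -> Prop) : Prop :=
  inhabited D /\ (forall a, le a a) /\
  (forall a b c, le a b -> le b c -> le a c) /\
  (forall a b, exists c, le a c /\ le b c).

Definition net_lim (D : Type) (le : D -> D -> Prop) (x : D -> R) (L : R) : Prop :=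
  forall eps, eps > 0 -> exists a0, forall a, le a0 a -> Rabs (x a - L) < eps.

Definition net_limsup (D : Type) (le : D -> D -> Prop) (x : D -> R) (L : R) : Prop :=
  forall eps, eps > 0 ->
    (exists a0, forall a, le a0 a -> x a <= L + eps) /\
    (forall a0, exists a, le a0 a /\ L - eps <= x a).

Definition unif_bounded (D Omega : Type) (f : D -> Omega -> R) : Prop :=
  exists M, forall a x, Rabs (f a x) <= M.

Definition net_cauchy_L1 (Omega : Type) (A : (Omega -> Prop) -> Prop)
  (D : Type) (le : D -> D -> Prop) (mu : (Omega -> Prop) -> R) (f : D -> Omega -> R) : Prop :=
  forall eps, eps > 0 -> exists a0, forall a1 a2, le a0 a1 -> le a0 a2 ->
    integ (tv A mu) (fun x => Rabs (f a1 x - f a2 x)) < eps.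

(* Main.v *)
Require Import Defs.
From Stdlib Require Import Reals Lra Lia List Classical ClassicalEpsilon FunctionalExtensionality PropExtensionality.
Open Scope R_scope.
Set Implicit Arguments.

Lemma set_ext {X : Type} (E F : X -> Prop) : (forall x, E x <-> F x) -> E = F.
Proof. intro H; apply functional_extensionality; intro x; apply propositional_extensionality; auto. Qed.

Definition lsum {X : Type} (g : X -> R) (l : list X) : R :=
  fold_right (fun a acc => g a + acc) 0 l.

Lemma lsum_nil {X} (g : X -> R) : lsum g nil = 0. Proof. reflexivity. Qed.
Lemma lsum_cons {X} (g : X -> R) a l : lsum g (a :: l) = g a + lsum g l. Proof. reflexivity. Qed.

Lemma lsum_app {X} (g : X -> R) l1 l2 : lsum g (l1 ++ l2) = lsum g l1 + lsum g l2.
Proof. induction l1; simpl; [ring|]. unfold lsum in *; simpl. rewrite IHl1; ring. Qed.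

Lemma lsum_ext {X} (g h : X -> R) l : (forall a, In a l -> g a = h a) -> lsum g l = lsum h l.
Proof. induction l; intro H; [reflexivity|]. rewrite !lsum_cons. rewrite H by (simpl; auto). rewrite IHl; auto. intros; apply H; simpl; auto. Qed.

Lemma lsum_le {X} (g h : X -> R) l : (forall a, In a l -> g a <= h a) -> lsum g l <= lsum h l.
Proof. induction l; intro H; unfold lsum in *; simpl; [lra|]. specialize (IHl (fun a H' => H a (or_intror H'))). specialize (H a (or_introl eq_refl)). lra. Qed.

Lemma lsum_plus {X} (g h : X -> R) l : lsum (fun a => g a + h a) l = lsum g l + lsum h l.
Proof. induction l; unfold lsum in *; simpl; [ring|]. rewrite IHl; ring. Qed.

Lemma lsum_scal {X} (c : R) (g : X -> R) l : lsum (fun a => c * g a) l = c * lsum g l.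
Proof. induction l; unfold lsum in *; simpl; [ring|]. rewrite IHl; ring. Qed.

Lemma lsum_opp {X} (g : X -> R) l : lsum (fun a => - g a) l = - lsum g l.
Proof. induction l; unfold lsum in *; simpl; [ring|]. rewrite IHl; ring. Qed.

Lemma lsum_minus {X} (g h : X -> R) l : lsum (fun a => g a - h a) l = lsum g l - lsum h l.
Proof. induction l; unfold lsum in *; simpl; [ring|]. rewrite IHl; ring. Qed.

Lemma lsum_zero {X} (g : X -> R) l : (forall a, In a l -> g a = 0) -> lsum g l = 0.
Proof. intro H. rewrite (lsum_ext g (fun _ => 0)) by auto. induction l; unfold lsum in *; simpl; auto. rewrite IHl; [ring|]. intros; auto with datatypes. Qed.

Lemma lsum_nonneg {X} (g : X -> R) l : (forall a, In a l -> 0 <= g a) -> 0 <= lsum g l.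
Proof. intro H. pose proof (lsum_le (fun _ => 0) g l H). rewrite lsum_zero in H0; auto. Qed.

Lemma lsum_abs {X} (g : X -> R) l : Rabs (lsum g l) <= lsum (fun a => Rabs (g a)) l.
Proof. induction l; unfold lsum in *; simpl. rewrite Rabs_R0; lra.
  eapply Rle_trans; [apply Rabs_triang|]. lra. Qed.

Lemma lsum_swap {X Y} (g : X -> Y -> R) l1 l2 :
  lsum (fun a => lsum (fun b => g a b) l2) l1 = lsum (fun b => lsum (fun a => g a b) l1) l2.
Proof. induction l1; simpl. rewrite lsum_zero; auto.
  change (lsum (fun b => g a b) l2 + lsum (fun a0 => lsum (fun b => g a0 b) l2) l1 = lsum (fun b => g a b + lsum (fun a0 => g a0 b) l1) l2). rewrite IHl1. rewrite <- lsum_plus. apply lsum_ext. intros; reflexivity. Qed.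

Lemma lsum_flat_map {X Y} (g : Y -> R) (h : X -> list Y) l :
  lsum g (flat_map h l) = lsum (fun a => lsum g (h a)) l.
Proof. induction l; simpl; auto. rewrite lsum_app, IHl. reflexivity. Qed.

Lemma lsum_map {X Y} (g : Y -> R) (h : X -> Y) l : lsum g (map h l) = lsum (fun a => g (h a)) l.
Proof. induction l; simpl; auto. unfold lsum in *; simpl; rewrite IHl; auto. Qed.

Lemma lsum_single {X} (g : X -> R) l c : NoDup l -> In c l ->
  (forall a, In a l -> a <> c -> g a = 0) -> lsum g l = g c.
Proof. induction l; intros Hn Hi H; [destruct Hi|]. inversion Hn; subst.
  rewrite lsum_cons. destruct Hi as [<-|Hi].
  - rewrite lsum_zero; [ring|]. intros b Hb. apply H; [auto with datatypes|]. intros ->; contradiction.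
  - rewrite IHl; auto with datatypes. rewrite H; [ring|auto with datatypes|]. intros ->; contradiction.
Qed.

Lemma Rabs_le_between x y : Rabs x <= y <-> -y <= x <= y.
Proof. unfold Rabs; destruct (Rcase_abs x); split; intros; lra. Qed.

Lemma le_sqrt_of_sq x y : 0 <= x -> x * x <= y -> x <= sqrt y.
Proof. intros Hx H. rewrite <- (sqrt_Rsqr x Hx). apply sqrt_le_1_alt. unfold Rsqr; lra. Qed.

Section Sets.
Variable Omega : Type.
Local Notation T := (Omega -> Prop).
Definition inter (E F : T) : T := fun x => E x /\ F x.
Definition pointless (E : T) := forall x, ~ E x.
Definition sub (E F : T) := forall x, E x -> F x.

Lemma pointless_eq E : pointless E -> E = @empty_set_ Omega.
Proof. intro H; apply set_ext; intro x; unfold empty_set_; split; [apply H|tauto]. Qed.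

Lemma inter_comm E F : inter E F = inter F E.
Proof. apply set_ext; unfold inter; tauto. Qed.

Fixpoint pdisj (l : list T) : Prop :=
  match l with nil => True | E :: l' => (forall F, In F l' -> disjoint E F) /\ pdisj l' end.

Definition U (l : list T) : T := fun x => exists E, In E l /\ E x.

Lemma pdisj_In l E F x : pdisj l -> In E l -> In F l -> E x -> F x -> E = F.
Proof. induction l; simpl; intros Hp HE HF Ex Fx; [destruct HE|]. destruct Hp as [H1 H2].
  destruct HE as [<-|HE]; destruct HF as [<-|HF]; auto.
  - exfalso; apply (H1 F HF x); auto.
  - exfalso; apply (H1 E HE x); auto. Qed.

Lemma pdisj_app l1 l2 : pdisj l1 -> pdisj l2 -> (forall E F, In E l1 -> In F l2 -> disjoint E F) -> pdisj (l1 ++ l2).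
Proof. induction l1; simpl; auto. intros [H1 H2] H3 H4. split; auto.
  intros F HF. apply in_app_or in HF. destruct HF; auto. Qed.

Lemma pdisj_map_inter E l : pdisj l -> pdisj (map (inter E) l).
Proof. induction l; simpl; auto. intros [H1 H2]; split; auto.
  intros F HF. apply in_map_iff in HF. destruct HF as [G [<- HG]]. intros x [[_ ?] [_ ?]]. apply (H1 G HG x); auto. Qed.

Definition meet (l1 l2 : list T) : list T := flat_map (fun E => map (inter E) l2) l1.

Lemma In_meet C l1 l2 : In C (meet l1 l2) <-> exists E F, In E l1 /\ In F l2 /\ C = inter E F.
Proof. unfold meet; rewrite in_flat_map. split.
  - intros [E [HE HC]]. apply in_map_iff in HC. destruct HC as [F [<- HF]]. eauto.
  - intros [E [F [HE [HF ->]]]]. exists E; split; auto. apply in_map; auto. Qed.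

Lemma pdisj_meet l1 l2 : pdisj l1 -> pdisj l2 -> pdisj (meet l1 l2).
Proof. induction l1; simpl; auto. intros [H1 H2] H3. apply pdisj_app; auto.
  apply pdisj_map_inter; auto. intros E F HE HF. apply in_map_iff in HE. destruct HE as [G [<- HG]].
  apply In_meet in HF. destruct HF as [E' [F' [HE' [_ ->]]]]. intros x [[? _] [? _]]. apply (H1 E' HE' x); auto. Qed.

Lemma sumabs_lsum (mu : T -> R) (l : list T) : sumabs mu l = lsum (fun S => Rabs (mu S)) l.
Proof. reflexivity. Qed.

Lemma pwd_pdisj l : pairwise_disjoint l -> pdisj l.
Proof. induction l; simpl; auto. intro H. split.
  - intros F HF. destruct (In_nth l F (@empty_set_ Omega) HF) as [j [Hj <-]].
    apply (H 0%nat (S j)); simpl; lia.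
  - apply IHl. intros i j Hij Hj. apply (H (S i) (S j)); simpl; lia. Qed.

Lemma pdisj_pwd l : pdisj l -> pairwise_disjoint l.
Proof. induction l; simpl. intros _ i j _ Hj; simpl in Hj; lia.
  intros [H1 H2] i j Hij Hj. destruct i; destruct j; try lia; simpl in *.
  - apply H1. apply nth_In; lia.
  - apply IHl; auto; lia. Qed.

End Sets.
Arguments inter {Omega}. Arguments pointless {Omega}. Arguments sub {Omega}.
Arguments pdisj {Omega}. Arguments U {Omega}. Arguments meet {Omega}.
Section Meas.
Variable Omega : Type.
Variable A : (Omega -> Prop) -> Prop.
Hypothesis HA : algebra A.
Notation T := (Omega -> Prop).

Lemma A_full : A (@full Omega). Proof. apply HA. Qed.
Lemma A_compl E : A E -> A (compl E). Proof. apply HA. Qed.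
Lemma A_union E F : A E -> A F -> A (union E F). Proof. apply HA. Qed.
Lemma A_empty : A (@empty_set_ Omega).
Proof. replace (@empty_set_ Omega) with (compl (@full Omega)). apply A_compl, A_full.
  apply set_ext; unfold compl, full, empty_set_; tauto. Qed.
Lemma A_inter E F : A E -> A F -> A (inter E F).
Proof. intros. replace (inter E F) with (compl (union (compl E) (compl F))).
  apply A_compl, A_union; apply A_compl; auto.
  apply set_ext; unfold compl, union, inter; intro; tauto. Qed.
Lemma A_U l : (forall E, In E l -> A E) -> A (U l).
Proof. induction l; intro H.
  - assert (E0 : @U Omega nil = @empty_set_ Omega) by (apply set_ext; unfold U, empty_set_; simpl; firstorder).
    rewrite E0. apply A_empty.
  - assert (E0 : U (a :: l) = union a (U l)) by (apply set_ext; unfold U, union; simpl; firstorder (subst; auto)).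
    rewrite E0. apply A_union; auto with datatypes.
Qed.

Definition part (p : list T) := (forall E, In E p -> A E) /\ pdisj p /\ (forall x, exists E, In E p /\ E x).
Definition refines (s p : list T) := forall F, In F s -> exists E, In E p /\ sub F E.

Lemma part_full : part (@full Omega :: nil).
Proof. split; [|split]. intros E [<-|[]]; apply A_full. simpl; split; auto; intros _ [].
  intro x; exists (@full Omega); simpl; unfold full; auto. Qed.

Lemma part_meet p s : part p -> part s -> part (meet p s).
Proof. intros [H1 [H2 H3]] [K1 [K2 K3]]. split; [|split].
  - intros C HC; apply In_meet in HC; destruct HC as [E [F [HE [HF ->]]]]. apply A_inter; auto.
  - apply pdisj_meet; auto.
  - intro x. destruct (H3 x) as [E [HE Ex]]; destruct (K3 x) as [F [HF Fx]].
    exists (inter E F); split. apply In_meet; eauto. split; auto. Qed.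

Lemma refines_meet_l p s : refines (meet p s) p.
Proof. intros C HC; apply In_meet in HC; destruct HC as [E [F [HE [HF ->]]]]. exists E; split; auto. intros x [? ?]; auto. Qed.
Lemma refines_meet_r p s : refines (meet p s) s.
Proof. intros C HC; apply In_meet in HC; destruct HC as [E [F [HE [HF ->]]]]. exists F; split; auto. intros x [? ?]; auto. Qed.
Lemma refines_trans a b c : refines a b -> refines b c -> refines a c.
Proof. intros H1 H2 F HF. destruct (H1 F HF) as [E [HE S1]]. destruct (H2 E HE) as [G [HG S2]]. exists G; split; auto. intros x Hx; auto. Qed.
Lemma refines_refl a : refines a a.
Proof. intros F HF; exists F; split; auto. intros x Hx; auto. Qed.

Section BAmu.
Variable mu : T -> R.
Hypothesis Hmu : ba A mu.

Lemma ba_add E F : A E -> A F -> disjoint E F -> mu (union E F) = mu E + mu F.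
Proof. apply Hmu. Qed.
Lemma ba_out E : ~ A E -> mu E = 0. Proof. apply Hmu. Qed.
Lemma ba_empty : mu (@empty_set_ Omega) = 0.
Proof. pose proof (ba_add A_empty A_empty). replace (union (@empty_set_ Omega) (@empty_set_ Omega)) with (@empty_set_ Omega) in H.
  assert (disjoint (@empty_set_ Omega) (@empty_set_ Omega)) by (intros x [[] _]). specialize (H H0). lra.
  apply set_ext; unfold union, empty_set_; tauto. Qed.
Lemma ba_pointless E : pointless E -> mu E = 0.
Proof. intro H; rewrite (pointless_eq H); apply ba_empty. Qed.

Lemma ba_inter_U S l : A S -> pdisj l -> (forall E, In E l -> A E) ->
  mu (inter S (U l)) = lsum (fun E => mu (inter S E)) l.
Proof. intros HS; induction l; intros Hp HAl.
  - simpl. apply ba_pointless. intros x [_ [E [[] _]]].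
  - rewrite lsum_cons. destruct Hp as [P1 P2].
    replace (inter S (U (a :: l))) with (union (inter S a) (inter S (U l))).
    rewrite ba_add. rewrite IHl; auto with datatypes.
    apply A_inter; auto with datatypes. apply A_inter; auto. apply A_U; auto with datatypes.
    intros x [[_ ?] [_ [E [HE ?]]]]. apply (P1 E HE x); auto.
    apply set_ext; unfold union, inter, U; simpl; firstorder (subst; auto).
Qed.

Lemma ba_sum p S : part p -> A S -> mu S = lsum (fun E => mu (inter S E)) p.
Proof. intros [H1 [H2 H3]] HS. rewrite <- ba_inter_U; auto. f_equal. apply set_ext; intro x; unfold inter, U; split.
  intro Hx; split; auto. tauto. Qed.

Lemma cell_sum (w : T -> R) p E0 C : pdisj p -> In E0 p -> sub C E0 ->
  lsum (fun E => w E * mu (inter C E)) p = w E0 * mu C.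
Proof. induction p; intros Hp HE0 HC; [destruct HE0|]. destruct Hp as [P1 P2]. rewrite lsum_cons.
  destruct (classic (In E0 p)) as [Hin|Hnin].
  - rewrite IHp; auto. rewrite (@ba_pointless (inter C a)); [ring|].
    intros x [Cx ax]. apply (P1 E0 Hin x); auto.
  - destruct HE0 as [->|]; [|contradiction].
    rewrite lsum_zero. replace (inter C E0) with C; [ring|].
    apply set_ext; unfold inter; intro x; split; auto; tauto.
    intros E HE. rewrite ba_pointless; [ring|]. intros x [Cx Ex]. apply (P1 E HE x); auto.
Qed.

End BAmu.
End Meas.
Section Pos.
Variable Omega : Type.
Variable A : (Omega -> Prop) -> Prop.
Hypothesis HA : algebra A.
Local Notation T := (Omega -> Prop).

Definition pos (la : T -> R) := ba A la /\ forall E, A E -> 0 <= la E.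
Definition dom (mu la : T -> R) := forall E, A E -> Rabs (mu E) <= la E.

Lemma pos_mono la E F : pos la -> A E -> A F -> sub E F -> la E <= la F.
Proof. intros [Hb Hp] HE HF HEF.
  replace (la F) with (la (union E (inter F (compl E)))).
  rewrite (ba_add Hb); auto. pose proof (Hp (inter F (compl E))). assert (A (inter F (compl E))).
  apply A_inter; auto. apply A_compl; auto. specialize (H H0). lra.
  apply A_inter; auto. apply A_compl; auto. intros x [? [_ ?]]; auto.
  f_equal; apply set_ext; unfold union, inter, compl; intro x; split; [intros [?|[? ?]]; auto|]. intro Fx. destruct (classic (E x)); auto.
Qed.

Lemma pos_lsum_le la l S : pos la -> pdisj l -> (forall E, In E l -> A E) -> (forall E, In E l -> sub E S) -> A S ->
  lsum la l <= la S.
Proof. intros Hl Hp HAl HS AS. pose proof (ba_inter_U HA (proj1 Hl) S l AS Hp HAl).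
  rewrite (lsum_ext _ la) in H. rewrite <- H. apply pos_mono; auto. apply A_inter; auto. apply A_U; auto.
  intros x [? ?]; auto.
  intros E HE. f_equal. apply set_ext; unfold inter; intro x; split; [tauto|]. intro; split; auto. apply (HS E HE); auto.
Qed.

Definition tvset (mu : T -> R) (S : T) := fun r => exists l, Forall A l /\ Forall (fun S' => forall x, S' x -> S x) l /\
   pairwise_disjoint l /\ r = sumabs mu l.

Lemma tv_lub mu S b : (forall l, Forall A l -> Forall (fun S' => forall x, S' x -> S x) l -> pairwise_disjoint l -> sumabs mu l <= b) ->
  is_lub (tvset mu S) (tv A mu S).
Proof. intro H. unfold tv. apply epsilon_spec.
  destruct (completeness (tvset mu S)) as [m Hm].
  exists b. intros r [l [H1 [H2 [H3 ->]]]]. apply H; auto.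
  exists 0. exists nil. split; [constructor|split; [constructor|split]]. intros i j _ Hj; simpl in Hj; lia. reflexivity.
  exists m; exact Hm. Qed.

Lemma tv_le mu S b : (forall l, Forall A l -> Forall (fun S' => forall x, S' x -> S x) l -> pairwise_disjoint l -> sumabs mu l <= b) ->
  tv A mu S <= b.
Proof. intro H. apply (tv_lub mu S H). intros r [l [H1 [H2 [H3 ->]]]]. apply H; auto. Qed.

Lemma tv_ge mu S b l : (forall l, Forall A l -> Forall (fun S' => forall x, S' x -> S x) l -> pairwise_disjoint l -> sumabs mu l <= b) ->
  Forall A l -> Forall (fun S' => forall x, S' x -> S x) l -> pairwise_disjoint l -> sumabs mu l <= tv A mu S.
Proof. intros H H1 H2 H3. apply (tv_lub mu S H). exists l; auto. Qed.

Lemma tv_nonneg mu S b : (forall l, Forall A l -> Forall (fun S' => forall x, S' x -> S x) l -> pairwise_disjoint l -> sumabs mu l <= b) ->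
  0 <= tv A mu S.
Proof. intro H. apply (@tv_ge mu S b nil H); try constructor. intros i j _ Hj; simpl in Hj; lia. Qed.

Lemma dom_sumabs mu la S l : pos la -> dom mu la -> A S ->
  Forall A l -> Forall (fun S' => forall x, S' x -> S x) l -> pairwise_disjoint l -> sumabs mu l <= la S.
Proof. intros Hl Hd AS H1 H2 H3. rewrite sumabs_lsum. apply Rle_trans with (lsum la l).
  apply lsum_le. intros E HE. apply Hd. rewrite Forall_forall in H1; auto.
  apply pos_lsum_le; auto. apply pwd_pdisj; auto. rewrite <- Forall_forall; auto.
  rewrite Forall_forall in H2. intros E HE x; apply H2; auto. Qed.

Lemma tv_dom mu la S : pos la -> dom mu la -> A S -> tv A mu S <= la S.
Proof. intros. apply tv_le. intros; eapply dom_sumabs; eauto. Qed.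

Section Jordan.
Variable mu : T -> R.
Hypothesis Hmu : ba A mu.

Definition ppset E := fun r => exists F, A F /\ sub F E /\ r = mu F.
Definition pp (E : T) : R := if excluded_middle_informative (A E) then
   epsilon (inhabits 0) (fun s => is_lub (ppset E) s) else 0.

Lemma pp_lub E : A E -> is_lub (ppset E) (pp E).
Proof. intro HE. unfold pp. destruct (excluded_middle_informative (A E)); [|contradiction].
  apply epsilon_spec. destruct Hmu as [_ [[M HM] _]].
  destruct (completeness (ppset E)) as [m Hm]. exists M. intros r [F [HF [_ ->]]]. specialize (HM F HF). apply Rabs_le_between in HM; lra.
  exists (mu E). exists E; split; auto; split; auto. intros x; auto. eauto. Qed.

Lemma pp_ge E F : A E -> A F -> sub F E -> mu F <= pp E.
Proof. intros. apply (pp_lub H). exists F; auto. Qed.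
Lemma pp_le E b : A E -> (forall F, A F -> sub F E -> mu F <= b) -> pp E <= b.
Proof. intros HE H. apply (pp_lub HE). intros r [F [? [? ->]]]; auto. Qed.

Lemma pp_add E G : A E -> A G -> disjoint E G -> pp (union E G) = pp E + pp G.
Proof. intros HE HG Hd. assert (HEG : A (union E G)) by (apply A_union; auto). apply Rle_antisym.
  - apply pp_le; auto. intros F HF HFs.
    replace F with (union (inter F E) (inter F G)).
    rewrite (ba_add Hmu). pose proof (@pp_ge E (inter F E)). pose proof (@pp_ge G (inter F G)).
    assert (mu (inter F E) <= pp E) by (apply H; auto; [apply A_inter; auto| intros x [? ?]; auto]).
    assert (mu (inter F G) <= pp G) by (apply H0; auto; [apply A_inter; auto| intros x [? ?]; auto]). lra.
    apply A_inter; auto. apply A_inter; auto. intros x [[? ?] [? ?]]. apply (Hd x); auto.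
    apply set_ext; unfold union, inter; intro x; split; [tauto|]. intro Fx. destruct (HFs x Fx); tauto.
  - cut (pp E <= pp (union E G) - pp G). lra.
    apply pp_le; auto. intros F1 HF1 S1. cut (pp G <= pp (union E G) - mu F1). lra.
    apply pp_le; auto. intros F2 HF2 S2. cut (mu (union F1 F2) <= pp (union E G)).
    rewrite (ba_add Hmu); auto. lra. intros x [? ?]. apply (Hd x); auto.
    apply pp_ge; auto. apply A_union; auto. intros x [?|?]; [left|right]; auto.
Qed.

Lemma pp_nonneg E : A E -> 0 <= pp E.
Proof. intro HE. rewrite <- (ba_empty HA Hmu). apply pp_ge; auto. apply A_empty; auto. intros x []. Qed.

Definition jdom := fun E => 2 * pp E - mu E.

Lemma jdom_pos : pos jdom.
Proof. destruct Hmu as [Hadd [[M HM] Hout]]. split; [split; [|split]|].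
  - intros E F HE HF Hd. unfold jdom. rewrite pp_add, Hadd; auto. ring.
  - exists (3 * M). intros E HE. unfold jdom. pose proof (pp_nonneg HE). assert (pp E <= M).
    apply pp_le; auto. intros F HF _. specialize (HM F HF). apply Rabs_le_between in HM; lra.
    pose proof (HM E HE). apply Rabs_le_between in H1. apply Rabs_le_between. lra.
  - intros E HE. unfold jdom, pp. destruct (excluded_middle_informative (A E)); [contradiction|]. rewrite Hout; auto; ring.
  - intros E HE. unfold jdom. pose proof (pp_nonneg HE). pose proof (pp_ge HE HE (fun x h => h)). lra.
Qed.

Lemma jdom_dom : dom mu jdom.
Proof. intros E HE. unfold jdom. pose proof (pp_nonneg HE). pose proof (pp_ge HE HE (fun x h => h)).
  apply Rabs_le_between; lra. Qed.

End Jordan.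

Lemma dom_exists mu : ba A mu -> exists la, pos la /\ dom mu la.
Proof. intro H. exists (jdom mu). split; [apply (jdom_pos H)|apply (jdom_dom H)]. Qed.

Lemma sumabs_bounded mu : ba A mu -> exists b, forall S l, Forall A l -> Forall (fun S' => forall x, S' x -> S x) l ->
   pairwise_disjoint l -> sumabs mu l <= b.
Proof. intro H. destruct (dom_exists H) as [la [Hl Hd]]. exists (la (@full Omega)). intros S l H1 H2 H3.
  apply (@dom_sumabs mu la (@full Omega)); auto. apply A_full; auto. rewrite Forall_forall; intros; unfold full; auto. Qed.

End Pos.
Section Integ.
Variable Omega : Type.
Variable A : (Omega -> Prop) -> Prop.
Hypothesis HA : algebra A.
Local Notation T := (Omega -> Prop).

Definition fval (f : Omega -> R) (E : T) : R := epsilon (inhabits 0) (fun r => exists x, E x /\ f x = r).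
Lemma fval_at f E x : E x -> (forall y, E y -> f y = f x) -> fval f E = f x.
Proof. intros Ex H. unfold fval. destruct (epsilon_spec (inhabits 0) (fun r => exists x, E x /\ f x = r)) as [y [Ey <-]].
  eauto. apply H; auto. Qed.

Definition const_on (p : list T) (f : Omega -> R) := forall E, In E p -> forall x y, E x -> E y -> f x = f y.

Definition vals (f : Omega -> R) := epsilon (inhabits nil) (fun l : list R => NoDup l /\ forall x, In (f x) l).
Lemma vals_spec f : simple A f -> NoDup (vals f) /\ forall x, In (f x) (vals f).
Proof. intros [[l Hl] _]. unfold vals. apply epsilon_spec. exists (nodup Req_dec_T l). split. apply NoDup_nodup.
  intro x; apply nodup_In; auto. Qed.

Lemma integ_eq mu f : integ mu f = lsum (fun y => y * mu (fun x => f x = y)) (vals f).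
Proof. reflexivity. Qed.

Definition lev (f : Omega -> R) := map (fun y => fun x => f x = y) (vals f).

Lemma pdisj_lev_aux (f : Omega -> R) (l : list R) : NoDup l -> pdisj (map (fun y => fun x => f x = y) l).
Proof. induction l; simpl; auto. intro Hn; inversion Hn; subst. split; auto.
  intros F HF. apply in_map_iff in HF. destruct HF as [y [<- Hy]]. intros x [K1 K2]. assert (a = y) by congruence. subst. contradiction. Qed.

Lemma part_lev f : simple A f -> part A (lev f).
Proof. intro Hs. destruct (vals_spec Hs) as [Hn Hc]. split; [|split].
  - intros E HE. apply in_map_iff in HE. destruct HE as [y [<- _]]. apply (proj2 Hs).
  - apply pdisj_lev_aux; auto.
  - intro x. exists (fun z => f z = f x). split; auto. apply in_map_iff. exists (f x); auto. Qed.

Lemma const_lev f : const_on (lev f) f.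
Proof. intros E HE x y Ex Ey. apply in_map_iff in HE. destruct HE as [z [<- _]]. congruence. Qed.

Lemma ba_sum' mu p S : ba A mu -> part A p -> A S -> mu S = lsum (fun E => mu (inter S E)) p.
Proof. intros. apply (ba_sum HA); auto. Qed.

Lemma FL mu f p : ba A mu -> simple A f -> part A p -> const_on p f ->
  integ mu f = lsum (fun E => mu E * fval f E) p.
Proof. intros Hmu Hs Hp Hc. rewrite integ_eq.
  rewrite (lsum_ext _ (fun y => lsum (fun E => y * mu (inter (fun x => f x = y) E)) p)).
  2:{ intros y _. rewrite (ba_sum' Hmu Hp (proj2 Hs y)). rewrite <- lsum_scal. reflexivity. }
  rewrite lsum_swap. apply lsum_ext. intros E HE. destruct (vals_spec Hs) as [Hn Hv].
  destruct (classic (exists x, E x)) as [[x0 Ex0]|Hno].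
  - rewrite (@lsum_single _ _ (vals f) (f x0)); auto.
    + rewrite (fval_at f E x0); auto. replace (inter (fun x => f x = f x0) E) with E. ring.
      apply set_ext; unfold inter; intro x; split; [|tauto]. intro Ex; split; auto. apply (Hc E HE); auto.
      intros y Ey; apply (Hc E HE); auto.
    + intros y _ Hy. rewrite (ba_pointless HA Hmu); [ring|]. intros x [Hx Ex]. apply Hy. rewrite <- Hx. apply (Hc E HE); auto.
  - rewrite lsum_zero. rewrite (ba_pointless HA Hmu); [ring|]. intros x Ex; apply Hno; eauto.
    intros y _. rewrite (ba_pointless HA Hmu); [ring|]. intros x [_ Ex]; apply Hno; eauto.
Qed.

Lemma simple_of_part f p : part A p -> const_on p f -> simple A f.
Proof. intros [H1 [H2 H3]] Hc. split.
  - exists (map (fval f) p). intro x. destruct (H3 x) as [E [HE Ex]]. apply in_map_iff. exists E; split; auto.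
    apply fval_at; auto. intros y Ey; apply (Hc E HE); auto.
  - intro y. replace (fun x => f x = y) with (U (filter (fun E => if Req_dec_T (fval f E) y then true else false) p)).
    apply (A_U HA). intros E HE. apply filter_In in HE. apply H1; tauto.
    apply set_ext; intro x; unfold U; split.
    + intros [E [HE Ex]]. apply filter_In in HE. destruct HE as [HE Hq]. destruct (Req_dec_T (fval f E) y); [|discriminate].
      rewrite <- e. symmetry; apply fval_at; auto. intros z Ez; apply (Hc E HE); auto.
    + intro Hx. destruct (H3 x) as [E [HE Ex]]. exists E; split; auto. apply filter_In; split; auto.
      destruct (Req_dec_T (fval f E) y) as [|n]; auto. exfalso; apply n. rewrite <- Hx. apply fval_at; auto.
      intros z Ez; apply (Hc E HE); auto.
Qed.

Definition psf (p : list T) (g : T -> R) : Omega -> R :=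
  fun x => lsum (fun E => if excluded_middle_informative (E x) then g E else 0) p.

Lemma psf_at p g E x : pdisj p -> In E p -> E x -> psf p g x = g E.
Proof. unfold psf. induction p; intros Hp HE Ex; [destruct HE|]. destruct Hp as [P1 P2]. rewrite lsum_cons.
  destruct (classic (In E p)) as [Hin|Hnin].
  - rewrite IHp; auto. destruct (excluded_middle_informative (a x)); [|ring]. exfalso; apply (P1 E Hin x); auto.
  - destruct HE as [->|]; [|contradiction]. destruct (excluded_middle_informative (E x)); [|contradiction].
    rewrite lsum_zero; [ring|]. intros F HF. destruct (excluded_middle_informative (F x)); auto.
    exfalso; apply (P1 F HF x); auto. Qed.

Lemma const_psf p g : pdisj p -> const_on p (psf p g).
Proof. intros Hp E HE x y Ex Ey. rewrite (@psf_at p g E x Hp HE Ex), (@psf_at p g E y Hp HE Ey); auto. Qed.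

Lemma simple_psf p g : part A p -> simple A (psf p g).
Proof. intro Hp. apply (simple_of_part Hp). apply const_psf, Hp. Qed.

Lemma const_meet_lev f g : const_on (meet (lev f) (lev g)) f /\ const_on (meet (lev f) (lev g)) g.
Proof. split; intros C HC x y Cx Cy; apply In_meet in HC; destruct HC as [E [F [HE [HF ->]]]];
  destruct Cx, Cy; [apply (const_lev f E HE)|apply (const_lev g F HF)]; auto. Qed.

Lemma simple_comb (F : R -> R -> R) f g : simple A f -> simple A g -> simple A (fun x => F (f x) (g x)).
Proof. intros Hf Hg. apply (simple_of_part (p := meet (lev f) (lev g))). apply (part_meet HA); apply part_lev; auto.
  destruct (const_meet_lev f g) as [H1 H2]. intros C HC x y Cx Cy. rewrite (H1 C HC x y), (H2 C HC x y); auto. Qed.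

Lemma simple_map (F : R -> R) f : simple A f -> simple A (fun x => F (f x)).
Proof. intro Hf. apply (simple_comb (fun a _ => F a) Hf Hf). Qed.

Lemma simple_const c : simple A (fun _ => c).
Proof. apply (simple_of_part (part_full HA)). intros E _ x y _ _; auto. Qed.

Lemma fval_case (mu : T -> R) (E : T) (P : Prop) : ba A mu ->
  (pointless E -> P) -> (forall x, E x -> P) -> P.
Proof. intros _ H1 H2. destruct (classic (exists x, E x)) as [[x Ex]|Hn]; eauto. apply H1. intros x Ex; eauto. Qed.

Lemma integ_lin mu f g a b : ba A mu -> simple A f -> simple A g ->
  integ mu (fun x => a * f x + b * g x) = a * integ mu f + b * integ mu g.
Proof. intros Hmu Hf Hg. set (p := meet (lev f) (lev g)). assert (Hp : part A p) by (apply (part_meet HA); apply part_lev; auto).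
  destruct (const_meet_lev f g) as [C1 C2].
  rewrite (FL Hmu (simple_comb (fun u v => a * u + b * v) Hf Hg) Hp).
  rewrite (FL Hmu Hf Hp C1), (FL Hmu Hg Hp C2). rewrite <- !lsum_scal, <- lsum_plus. apply lsum_ext.
  intros E HE. destruct (classic (exists x, E x)) as [[x Ex]|Hn].
  - rewrite !(fval_at _ E x Ex). ring. intros y Ey; apply (C2 E HE); auto. intros y Ey; apply (C1 E HE); auto.
    intros y Ey. rewrite (C1 E HE y x), (C2 E HE y x); auto.
  - rewrite (ba_pointless HA Hmu); [ring|]. intros x Ex; apply Hn; eauto.
  - intros C HC x y Cx Cy. rewrite (C1 C HC x y), (C2 C HC x y); auto.
Qed.

Lemma integ_mono la f g : pos A la -> simple A f -> simple A g -> (forall x, f x <= g x) -> integ la f <= integ la g.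
Proof. intros Hl Hf Hg Hfg. set (p := meet (lev f) (lev g)). assert (Hp : part A p) by (apply (part_meet HA); apply part_lev; auto).
  destruct (const_meet_lev f g) as [C1 C2].
  rewrite (FL (proj1 Hl) Hf Hp C1), (FL (proj1 Hl) Hg Hp C2). apply lsum_le.
  intros E HE. destruct (classic (exists x, E x)) as [[x Ex]|Hn].
  - rewrite !(fval_at _ E x Ex). apply Rmult_le_compat_l; auto. apply (proj2 Hl). apply (proj1 Hp); auto.
    intros y Ey; apply (C2 E HE); auto. intros y Ey; apply (C1 E HE); auto.
  - rewrite (ba_pointless HA (proj1 Hl)); [lra|]. intros x Ex; apply Hn; eauto.
Qed.

Lemma integ_const mu c : ba A mu -> integ mu (fun _ => c) = c * mu (@full Omega).
Proof. intro Hmu. rewrite (FL Hmu (simple_const c) (part_full HA)). 2:{ intros E _ x y _ _; auto. }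
  rewrite lsum_cons, lsum_nil. destruct (classic (exists x : Omega, True)) as [[x _]|Hn].
  - rewrite (fval_at _ _ x); auto. ring. exact I.
  - rewrite (ba_pointless HA Hmu); [ring|]. intros x _; apply Hn; eauto.
Qed.

Lemma integ_nonneg la f : pos A la -> simple A f -> (forall x, 0 <= f x) -> 0 <= integ la f.
Proof. intros. pose proof (integ_mono H (simple_const 0) H0 H1). rewrite integ_const in H2. lra. apply H. Qed.

Lemma integ_abs_dom nu la u : ba A nu -> pos A la -> dom A nu la -> simple A u ->
  Rabs (integ nu u) <= integ la (fun x => Rabs (u x)).
Proof. intros Hn Hl Hd Hu. pose proof (part_lev Hu) as Hp.
  assert (Ca : const_on (lev u) (fun x => Rabs (u x))). intros E HE x y Ex Ey; rewrite (const_lev u E HE x y); auto.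
  rewrite (FL Hn Hu Hp (const_lev u)), (FL (proj1 Hl) (simple_map Rabs Hu) Hp Ca).
  eapply Rle_trans; [apply lsum_abs|]. apply lsum_le. intros E HE.
  destruct (classic (exists x, E x)) as [[x Ex]|Hno].
  - rewrite !(fval_at _ E x Ex). rewrite Rabs_mult. apply Rmult_le_compat_r. apply Rabs_pos. apply Hd. apply (proj1 Hp); auto.
    intros y Ey; apply (Ca E HE); auto. intros y Ey; apply (const_lev u E HE); auto.
  - rewrite (ba_pointless HA Hn), (ba_pointless HA (proj1 Hl)); try (intros x Ex; apply Hno; eauto). rewrite Rmult_0_l, Rabs_R0; lra.
Qed.

Lemma integ_mono_meas (m m' : T -> R) h : (forall y, y * m (fun x => h x = y) <= y * m' (fun x => h x = y)) ->
  integ m h <= integ m' h.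
Proof. intro H. rewrite !integ_eq. apply lsum_le; auto. Qed.

Lemma integ_CS la u : pos A la -> simple A u ->
  integ la (fun x => Rabs (u x)) * integ la (fun x => Rabs (u x)) <= la (@full Omega) * integ la (fun x => u x * u x).
Proof. intros Hl Hu. set (I1 := integ la (fun x => Rabs (u x))). set (I2 := integ la (fun x => u x * u x)).
  set (L := la (@full Omega)).
  assert (Hq : forall t, 0 <= I2 - 2 * t * I1 + t * t * L).
  { intro t. assert (Hs1 : simple A (fun x => Rabs (u x))) by (apply simple_map; auto).
    assert (Hs2 : simple A (fun x => u x * u x)) by (apply (simple_comb Rmult); auto).
    assert (E1 : integ la (fun x => (Rabs (u x) - t) * (Rabs (u x) - t)) =
      1 * integ la (fun x => u x * u x) + (- 2 * t) * integ la (fun x => Rabs (u x)) + t * t * la (@full Omega)).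
    { replace (fun x => (Rabs (u x) - t) * (Rabs (u x) - t)) with
        (fun x => 1 * (1 * (u x * u x) + (-2*t) * Rabs (u x)) + 1 * (t*t)).
      rewrite (integ_lin 1 1 (proj1 Hl) (simple_comb (fun a b => 1*a + (-2*t)*b) Hs2 Hs1) (simple_const (t*t))).
      rewrite (integ_lin 1 (-2*t) (proj1 Hl) Hs2 Hs1), integ_const by apply Hl. ring.
      apply functional_extensionality; intro x. pose proof (Rsqr_abs (u x)). unfold Rsqr in H. rewrite H; ring. }
    assert (0 <= integ la (fun x => (Rabs (u x) - t) * (Rabs (u x) - t))).
    apply integ_nonneg; auto. apply (simple_map (fun a => (Rabs a - t) * (Rabs a - t))); auto. intro x; cbv beta; apply Rle_0_sqr.
    unfold I1, I2, L. lra. }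
  assert (HL : 0 <= L) by (apply Hl, A_full, HA).
  assert (HI1 : 0 <= I1) by (apply integ_nonneg; auto; [apply simple_map; auto|intro; apply Rabs_pos]).
  destruct (Req_dec_T L 0) as [HL0|HL0].
  - destruct (Req_dec_T I1 0) as [HI0|HI0]. rewrite HI0, HL0; lra.
    specialize (Hq ((I2 + 1) / (2 * I1))). rewrite HL0 in Hq.
    assert (2 * ((I2 + 1) / (2 * I1)) * I1 = I2 + 1) by (field; lra). lra.
  - specialize (Hq (I1 / L)). assert (0 < L) by lra.
    assert (I2 - 2 * (I1 / L) * I1 + I1 / L * (I1 / L) * L = I2 - I1 * I1 / L) by (field; lra).
    rewrite H0 in Hq. assert (I1 * I1 / L * L = I1 * I1) by (field; lra).
    assert (0 <= (I2 - I1 * I1 / L) * L) by (apply Rmult_le_pos; lra). nra.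
Qed.

End Integ.
Lemma In_le_lsum_abs (l : list R) y : In y l -> Rabs y <= lsum Rabs l.
Proof. induction l; intro H; [destruct H|]. rewrite lsum_cons. pose proof (lsum_nonneg Rabs l (fun a _ => Rabs_pos a)).
  destruct H as [->|H]. lra. specialize (IHl H). pose proof (Rabs_pos a). lra. Qed.

Section Func.
Variable Omega : Type.
Variable A : (Omega -> Prop) -> Prop.
Hypothesis HA : algebra A.
Local Notation T := (Omega -> Prop).

Lemma simple_bounded f : simple A f -> exists M, forall x, Rabs (f x) <= M.
Proof. intros [[l Hl] _]. exists (lsum Rabs l). intro x. apply In_le_lsum_abs; auto. Qed.

Definition supset (f : Omega -> R) := fun r => r = 0 \/ exists x, r = Rabs (f x).
Lemma supnorm_lub (f : Omega -> R) M : (forall x, Rabs (f x) <= M) -> is_lub (supset f) (supnorm f).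
Proof. intro H. unfold supnorm. apply epsilon_spec. destruct (completeness (supset f)) as [m Hm].
  exists (Rmax 0 M). intros r [->|[x ->]]. apply Rmax_l. eapply Rle_trans; [apply H|apply Rmax_r].
  exists 0; left; auto. eauto. Qed.
Lemma supnorm_ge (f : Omega -> R) M x : (forall x, Rabs (f x) <= M) -> Rabs (f x) <= supnorm f.
Proof. intro H. apply (supnorm_lub f H). right; eauto. Qed.
Lemma supnorm_nonneg (f : Omega -> R) M : (forall x, Rabs (f x) <= M) -> 0 <= supnorm f.
Proof. intro H. apply (supnorm_lub f H). left; auto. Qed.
Lemma supnorm_le (f : Omega -> R) M : 0 <= M -> (forall x, Rabs (f x) <= M) -> supnorm f <= M.
Proof. intros H0 H. apply (supnorm_lub f H). intros r [->|[x ->]]; auto. Qed.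

Lemma tv_ge_ba mu l : ba A mu -> Forall A l -> pairwise_disjoint l -> sumabs mu l <= ba_norm A mu.
Proof. intros Hmu H1 H2. destruct (sumabs_bounded HA Hmu) as [b Hb]. unfold ba_norm.
  apply (@tv_ge _ A mu (@full Omega) b l); auto.
  intros; eapply Hb; eauto. rewrite Forall_forall; intros; unfold full; auto. Qed.

Lemma ba_norm_nonneg mu : ba A mu -> 0 <= ba_norm A mu.
Proof. intro Hmu. pose proof (@tv_ge_ba mu nil Hmu (Forall_nil _)). simpl in H. apply H.
  intros i j _ Hj; simpl in Hj; lia. Qed.

Lemma integ_sup mu f : ba A mu -> simple A f -> Rabs (integ mu f) <= supnorm f * ba_norm A mu.
Proof. intros Hmu Hf. destruct (simple_bounded Hf) as [M HM]. pose proof (part_lev Hf) as Hp.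
  rewrite (FL HA Hmu Hf Hp (const_lev f)). eapply Rle_trans; [apply lsum_abs|].
  apply Rle_trans with (supnorm f * sumabs mu (lev f)).
  - rewrite sumabs_lsum, <- lsum_scal. apply lsum_le. intros E HE. rewrite Rabs_mult.
    destruct (classic (exists x, E x)) as [[x Ex]|Hno].
    + rewrite (fval_at _ E x Ex). rewrite Rmult_comm. apply Rmult_le_compat_r. apply Rabs_pos. apply (supnorm_ge f x HM).
      intros y Ey; apply (const_lev f E HE); auto.
    + rewrite (ba_pointless HA Hmu). rewrite Rabs_R0, Rmult_0_l, Rmult_0_r; lra. intros x Ex; apply Hno; eauto.
  - apply Rmult_le_compat_l. apply (supnorm_nonneg f x0 HM) || (apply (supnorm_lub f HM); left; auto).
    apply tv_ge_ba; auto. rewrite Forall_forall; apply Hp. apply pdisj_pwd, Hp.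
Qed.

Lemma ba_comb mu nu a b : ba A mu -> ba A nu -> ba A (fun E => a * mu E + b * nu E).
Proof. intros [H1 [[M1 H2] H3]] [K1 [[M2 K2] K3]]. split; [|split].
  - intros E F HE HF Hd. rewrite H1, K1; auto. ring.
  - exists (Rabs a * M1 + Rabs b * M2). intros E HE. eapply Rle_trans; [apply Rabs_triang|]. rewrite !Rabs_mult.
    apply Rplus_le_compat; apply Rmult_le_compat_l; auto; apply Rabs_pos.
  - intros E HE. rewrite H3, K3; auto. ring. Qed.

Lemma ba_zero : ba A (fun _ => 0).
Proof. split; [|split]. intros; ring. exists 0; intros; rewrite Rabs_R0; lra. auto. Qed.

Lemma ba_lsum {I} (m : I -> T -> R) l : (forall i, In i l -> ba A (m i)) -> ba A (fun F => lsum (fun i => m i F) l).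
Proof. induction l; intro H. apply ba_zero.
  replace (fun F => lsum (fun i => m i F) (a :: l)) with (fun F => 1 * m a F + 1 * lsum (fun i => m i F) l).
  apply ba_comb; auto with datatypes. apply functional_extensionality; intro F. rewrite lsum_cons. ring. Qed.

Lemma tv_scale mu t : ba A mu -> ba_norm A (fun E => t * mu E) <= Rabs t * ba_norm A mu.
Proof. intro Hmu. unfold ba_norm. apply tv_le. intros l H1 H2 H3.
  rewrite !sumabs_lsum. rewrite (lsum_ext _ (fun S => Rabs t * Rabs (mu S))). rewrite lsum_scal.
  apply Rmult_le_compat_l. apply Rabs_pos. rewrite <- sumabs_lsum. apply tv_ge_ba; auto.
  intros; apply Rabs_mult. Qed.

Definition rest (mu : T -> R) (E : T) : T -> R :=
  fun F => if excluded_middle_informative (A F) then mu (inter F E) else 0.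

Lemma ba_rest mu E : ba A mu -> A E -> ba A (rest mu E).
Proof. intros [H1 [[M H2] H3]] HE. unfold rest. split; [|split].
  - intros F G HF HG Hd. assert (A (union F G)) by (apply A_union; auto).
    destruct (excluded_middle_informative (A (union F G))); [|contradiction].
    destruct (excluded_middle_informative (A F)); [|contradiction]. destruct (excluded_middle_informative (A G)); [|contradiction].
    rewrite <- H1. f_equal. apply set_ext; unfold inter, union; intro x; tauto.
    apply A_inter; auto. apply A_inter; auto. intros x [[? _] [? _]]; apply (Hd x); auto.
  - exists M. intros F HF. destruct (excluded_middle_informative (A F)); [|rewrite Rabs_R0; specialize (H2 _ HE); pose proof (Rabs_pos (mu E)); lra].
    apply H2. apply A_inter; auto.
  - intros F HF. destruct (excluded_middle_informative (A F)); [contradiction|reflexivity]. Qed.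

Lemma pos_rest la E : pos A la -> A E -> pos A (rest la E).
Proof. intros [Hb Hp] HE. split. apply ba_rest; auto. intros F HF. unfold rest.
  destruct (excluded_middle_informative (A F)); [|lra]. apply Hp, A_inter; auto. Qed.

Lemma norm_rest la E : pos A la -> A E -> ba_norm A (rest la E) <= la E.
Proof. intros Hl HE. unfold ba_norm. eapply Rle_trans. apply (@tv_dom _ A HA (rest la E) (rest la E) (@full Omega)).
  apply pos_rest; auto. intros F HF. rewrite Rabs_right. lra. apply Rle_ge, (pos_rest Hl HE); auto. apply A_full; auto.
  unfold rest. destruct (excluded_middle_informative (A (@full Omega))). right; f_equal. apply set_ext; unfold inter, full; tauto.
  exfalso; apply n, A_full; auto. Qed.

Lemma tvq mu p b : ba A mu -> part A p ->
  (forall s, part A s -> refines s p -> lsum (fun C => Rabs (mu C)) s <= b) -> ba_norm A mu <= b.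
Proof. intros Hmu Hp Hb. unfold ba_norm. apply tv_le. intros l H1 _ H3.
  set (c := compl (U l)). set (s0 := l ++ c :: nil).
  assert (HAl : forall E, In E l -> A E) by (rewrite <- Forall_forall; auto).
  assert (Hs0 : part A s0). { split; [|split].
    - intros E HE. apply in_app_or in HE. destruct HE as [HE|[<-|[]]]. auto. apply A_compl; auto. apply A_U; auto.
    - apply pdisj_app. apply pwd_pdisj; auto. simpl; split; auto; intros _ [].
      intros E F HE [<-|[]]. intros x [Ex Fx]. apply Fx. exists E; auto.
    - intro x. destruct (classic (U l x)) as [[E [HE Ex]]|Hn]. exists E; split; auto. apply in_or_app; auto.
      exists c; split; auto. apply in_or_app; simpl; auto. }
  eapply Rle_trans; [|apply (Hb (meet s0 p))]. 2: apply part_meet; auto. 2: apply refines_meet_r.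
  rewrite sumabs_lsum. apply Rle_trans with (lsum (fun C => Rabs (mu C)) s0).
  unfold s0. rewrite lsum_app. pose proof (lsum_nonneg (fun C => Rabs (mu C)) (c :: nil) (fun a _ => Rabs_pos _)). lra.
  unfold meet. rewrite lsum_flat_map. apply lsum_le. intros G HG. rewrite lsum_map.
  rewrite (ba_sum HA Hmu G Hp (proj1 Hs0 G HG)). apply lsum_abs.
Qed.

Section Mart.
Variables mu la : T -> R.
Variable K : R.
Hypothesis Hmu : ba A mu.
Hypothesis Hla : pos A la.
Hypothesis HK : 0 <= K.
Hypothesis Hd : forall E, A E -> Rabs (mu E) <= K * la E.

Definition dens (E : T) : R := if Req_dec_T (la E) 0 then 0 else mu E / la E.

Lemma dens_mul E : la E * dens E = mu E.
Proof. unfold dens. destruct (Req_dec_T (la E) 0) as [H|H].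
  - destruct (classic (A E)) as [HE|HE]. pose proof (@Hd E HE) as Hd'. rewrite H in Hd'. rewrite Rmult_0_r in Hd'.
    pose proof (Rabs_pos (mu E)). assert (Rabs (mu E) = 0) by lra. apply Rabs_le_between in Hd'. assert (mu E = 0) by lra. rewrite H2; ring.
    rewrite (ba_out Hmu _ HE); ring.
  - field; auto. Qed.

Lemma dens_bound E : Rabs (dens E) <= K.
Proof. unfold dens. destruct (Req_dec_T (la E) 0) as [H|H]. rewrite Rabs_R0; auto.
  destruct (classic (A E)) as [HE|HE]; [|exfalso; apply H, (ba_out (proj1 Hla) _ HE)].
  pose proof (proj2 Hla E HE). pose proof (@Hd E HE) as Hd'. unfold Rdiv. rewrite Rabs_mult, Rabs_inv, (Rabs_right (la E)) by lra.
  apply Rmult_le_reg_r with (la E). lra. rewrite Rmult_assoc, Rinv_l; lra. Qed.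

Definition Qe p := integ la (fun x => psf p dens x * psf p dens x).
Definition Dsq s p := integ la (fun x => (psf s dens x - psf p dens x) * (psf s dens x - psf p dens x)).

Lemma psf_bound p x : part A p -> Rabs (psf p dens x) <= K.
Proof. intro Hp. destruct (proj2 (proj2 Hp) x) as [E [HE Ex]]. rewrite (psf_at _ dens _ _ (proj1 (proj2 Hp)) HE Ex). apply dens_bound. Qed.

Lemma simple_psf2 p s (F : R -> R -> R) : part A p -> part A s -> simple A (fun x => F (psf s dens x) (psf p dens x)).
Proof. intros. apply (simple_comb HA); apply (simple_psf HA); auto. Qed.

Lemma Qe_bound p : part A p -> Qe p <= K * K * la (@full Omega).
Proof. intro Hp. unfold Qe. rewrite <- (integ_const HA (K*K) (proj1 Hla)). apply (integ_mono HA); auto.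
  apply (simple_psf2 Rmult); auto. apply (simple_const HA). intro x. pose proof (psf_bound x Hp).
  apply Rabs_le_between in H. nra. Qed.

Lemma Dsq_nonneg s p : part A s -> part A p -> 0 <= Dsq s p.
Proof. intros. unfold Dsq. apply (integ_nonneg HA); auto. apply (simple_psf2 (fun a b => (a - b) * (a - b))); auto.
  intro; apply Rle_0_sqr. Qed.

Lemma cross_term s p : part A s -> part A p -> refines s p ->
  integ la (fun x => psf s dens x * psf p dens x) = Qe p.
Proof. intros Hs Hp Hr. destruct Hs as [S1 [S2 S3]]. destruct Hp as [P1 [P2 P3]].
  assert (Hc : const_on s (fun x => psf s dens x * psf p dens x)).
  { intros C HC x y Cx Cy. destruct (Hr C HC) as [E0 [HE0 HCE]].
    rewrite (psf_at _ dens _ _ S2 HC Cx), (psf_at _ dens _ _ S2 HC Cy), (psf_at _ dens _ _ P2 HE0 (HCE x Cx)), (psf_at _ dens _ _ P2 HE0 (HCE y Cy)); auto. }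
  rewrite (FL HA (proj1 Hla) (simple_psf2 Rmult (conj P1 (conj P2 P3)) (conj S1 (conj S2 S3))) (conj S1 (conj S2 S3)) Hc).
  rewrite (lsum_ext _ (fun C => lsum (fun E => dens E * mu (inter C E)) p)).
  2:{ intros C HC. destruct (classic (exists x, C x)) as [[x Cx]|Hno].
      - destruct (Hr C HC) as [E0 [HE0 HCE]]. rewrite (cell_sum HA Hmu dens p P2 HE0 HCE).
        rewrite (fval_at _ C x Cx). rewrite (psf_at _ dens _ _ S2 HC Cx), (psf_at _ dens _ _ P2 HE0 (HCE x Cx)).
        rewrite <- (dens_mul C). ring. intros y Cy; apply (Hc C HC); auto.
      - rewrite (ba_pointless HA (proj1 Hla)). rewrite lsum_zero. ring. intros E _. rewrite (ba_pointless HA Hmu). ring.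
        intros x [Cx _]; apply Hno; eauto. intros x Cx; apply Hno; eauto. }
  rewrite lsum_swap. unfold Qe.
  assert (Hc2 : const_on p (fun x => psf p dens x * psf p dens x)).
  { intros E HE x y Ex Ey. rewrite (psf_at _ dens _ _ P2 HE Ex), (psf_at _ dens _ _ P2 HE Ey); auto. }
  rewrite (FL HA (proj1 Hla) (simple_psf2 Rmult (conj P1 (conj P2 P3)) (conj P1 (conj P2 P3))) (conj P1 (conj P2 P3)) Hc2).
  apply lsum_ext. intros E HE. rewrite lsum_scal.
  rewrite (lsum_ext _ (fun C => mu (inter E C))) by (intros; rewrite inter_comm; auto).
  rewrite <- (ba_sum HA Hmu E (conj S1 (conj S2 S3)) (P1 E HE)).
  destruct (classic (exists x, E x)) as [[x Ex]|Hno].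
  - rewrite (fval_at _ E x Ex). rewrite (psf_at _ dens _ _ P2 HE Ex). rewrite <- (dens_mul E). ring. intros y Ey; apply (Hc2 E HE); auto.
  - rewrite (ba_pointless HA Hmu), (ba_pointless HA (proj1 Hla)); try ring; intros x Ex; apply Hno; eauto.
Qed.

Lemma pyth s p : part A s -> part A p -> refines s p -> Dsq s p = Qe s - Qe p.
Proof. intros Hs Hp Hr. unfold Dsq.
  replace (fun x => (psf s dens x - psf p dens x) * (psf s dens x - psf p dens x)) with
    (fun x => 1 * (1 * (psf s dens x * psf s dens x) + (-2) * (psf s dens x * psf p dens x)) + 1 * (psf p dens x * psf p dens x)).
  rewrite (integ_lin HA 1 1 (proj1 Hla)). rewrite (integ_lin HA 1 (-2) (proj1 Hla)). rewrite (cross_term Hs Hp Hr). unfold Qe; ring.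
  apply (simple_psf2 Rmult); auto. apply (simple_psf2 Rmult); auto.
  apply (simple_psf2 (fun a b => 1 * (a * a) + (-2) * (a * b))); auto. apply (simple_psf2 Rmult); auto.
  apply functional_extensionality; intro x; ring.
Qed.

Definition good p eta := part A p /\ forall s, part A s -> refines s p -> Dsq s p <= eta.

Lemma good_exists p0 eta : 0 < eta -> part A p0 -> exists p, refines p p0 /\ good p eta.
Proof. intros He Hp0. set (Qs := fun r => exists p, part A p /\ r = Qe p).
  destruct (completeness Qs) as [S HS]. exists (K * K * la (@full Omega)). intros r [p [Hp ->]]. apply Qe_bound; auto.
  exists (Qe (@full Omega :: nil)). exists (@full Omega :: nil); split; auto. apply part_full; auto.
  assert (exists p1, part A p1 /\ S - eta < Qe p1).
  { apply NNPP; intro Hn. assert (S <= S - eta). apply HS. intros r [p [Hp ->]].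
    apply Rnot_lt_le; intro; apply Hn; eauto. lra. }
  destruct H as [p1 [Hp1 Hq]]. exists (meet p0 p1). assert (Hm : part A (meet p0 p1)) by (apply part_meet; auto).
  split. apply refines_meet_l. split; auto. intros s Hs Hr.
  rewrite pyth; auto. assert (Qe s <= S) by (apply HS; exists s; auto).
  pose proof (Dsq_nonneg Hm Hp1). rewrite pyth in H0; auto. lra. apply refines_meet_r.
Qed.

Lemma good_refine p p' eta : good p eta -> part A p' -> refines p' p -> good p' eta.
Proof. intros [Hp Hg] Hp' Hr. split; auto. intros s Hs Hr'. specialize (Hg s Hs (refines_trans Hr' Hr)).
  rewrite pyth in Hg |- *; auto. pose proof (Dsq_nonneg Hp' Hp). rewrite pyth in H; auto. lra.
  apply (refines_trans Hr' Hr). Qed.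

Lemma good_L1 p eta s : good p eta -> part A s -> refines s p ->
  integ la (fun x => Rabs (psf s dens x - psf p dens x)) <= sqrt (la (@full Omega) * eta).
Proof. intros [Hp Hg] Hs Hr. apply le_sqrt_of_sq. apply (integ_nonneg HA); auto.
  apply (simple_psf2 (fun a b => Rabs (a - b))); auto. intro; apply Rabs_pos.
  eapply Rle_trans. apply (integ_CS HA Hla (simple_psf2 Rminus Hp Hs)).
  apply Rmult_le_compat_l. apply Hla, A_full; auto. apply Hg; auto. Qed.

End Mart.

End Func.
Section Phi.
Variable Omega : Type.
Variable A : (Omega -> Prop) -> Prop.
Hypothesis HA : algebra A.
Local Notation T := (Omega -> Prop).
Variable phi : (T -> R) -> R.
Hypothesis Hlin : linear_on_ba A phi.

Lemma phi_zero : phi (fun _ => 0) = 0.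
Proof. pose proof (Hlin 0 0 (ba_zero A) (ba_zero A)). cbv beta in H. replace (fun E : T => 0 * 0 + 0 * 0) with (fun _ : T => 0) in H.
  rewrite H; ring. apply functional_extensionality; intro; ring. Qed.

Lemma phi_lsum {I} (m : I -> T -> R) l : (forall i, In i l -> ba A (m i)) ->
  phi (fun F => lsum (fun i => m i F) l) = lsum (fun i => phi (m i)) l.
Proof. induction l; intro H. apply phi_zero.
  replace (fun F => lsum (fun i => m i F) (a :: l)) with (fun F => 1 * m a F + 1 * lsum (fun i => m i F) l).
  rewrite Hlin. rewrite IHl. rewrite lsum_cons; ring. auto with datatypes. auto with datatypes. apply ba_lsum; auto with datatypes.
  apply functional_extensionality; intro F. rewrite lsum_cons. ring. Qed.

Lemma phi_sub mu nu : ba A mu -> ba A nu -> phi (fun E => nu E - mu E) = phi nu - phi mu.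
Proof. intros. replace (fun E => nu E - mu E) with (fun E => 1 * nu E + (-1) * mu E). rewrite Hlin; auto. ring.
  apply functional_extensionality; intro; ring. Qed.

Lemma phi_scale mu t : ba A mu -> phi (fun E => t * mu E) = t * phi mu.
Proof. intros. replace (fun E => t * mu E) with (fun E => t * mu E + 0 * mu E). rewrite Hlin; auto. ring.
  apply functional_extensionality; intro; ring. Qed.

Section Bounded.
Variable C : R.
Hypothesis HC0 : 0 <= C.
Hypothesis HC : forall mu, ba A mu -> Rabs (phi mu) <= C * ba_norm A mu.

Lemma phi_rest_bound la E : pos A la -> A E -> Rabs (phi (rest A la E)) <= C * la E.
Proof. intros Hl HE. eapply Rle_trans. apply HC, (ba_rest HA); auto. apply Hl.
  apply Rmult_le_compat_l; auto. apply (norm_rest HA); auto. Qed.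

Definition tau (la : T -> R) : T -> R := fun E => if excluded_middle_informative (A E) then phi (rest A la E) else 0.

Lemma tau_dom la : pos A la -> forall E, A E -> Rabs (tau la E) <= C * la E.
Proof. intros Hl E HE. unfold tau. destruct (excluded_middle_informative (A E)); [|contradiction]. apply phi_rest_bound; auto. Qed.

Lemma ba_tau la : pos A la -> ba A (tau la).
Proof. intro Hl. split; [|split].
  - intros E G HE HG Hd. unfold tau. assert (HEG : A (union E G)) by (apply A_union; auto).
    destruct (excluded_middle_informative (A (union E G))); [|contradiction].
    destruct (excluded_middle_informative (A E)); [|contradiction]. destruct (excluded_middle_informative (A G)); [|contradiction].
    replace (rest A la (union E G)) with (fun F => 1 * rest A la E F + 1 * rest A la G F).
    rewrite Hlin. ring. apply (ba_rest HA); auto. apply Hl. apply (ba_rest HA); auto. apply Hl.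
    apply functional_extensionality; intro F. unfold rest. destruct (excluded_middle_informative (A F)); [|ring].
    rewrite !Rmult_1_l. rewrite <- (ba_add (proj1 Hl)). f_equal. apply set_ext; unfold inter, union; intro x; tauto.
    apply A_inter; auto. apply A_inter; auto. intros x [[_ ?] [_ ?]]; apply (Hd x); auto.
  - exists (C * la (@full Omega)). intros E HE. eapply Rle_trans. apply tau_dom; auto. apply Rmult_le_compat_l; auto.
    apply (pos_mono HA); auto. apply A_full; auto. intros x _; exact I.
  - intros E HE. unfold tau. destruct (excluded_middle_informative (A E)); [contradiction|reflexivity].
Qed.

Lemma CROSS mu la p eta : ba A mu -> pos A la -> (forall E, A E -> Rabs (mu E) <= 1 * la E) ->
  good A mu la p eta ->
  lsum (fun E => Rabs (phi (rest A mu E) - dens mu la E * phi (rest A la E))) p <= C * sqrt (la (@full Omega) * eta).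
Proof. intros Hmu Hla Hd Hg. pose proof (proj1 Hg) as Hp. destruct Hp as [P1 [P2 P3]].
  set (X := fun E => phi (rest A mu E) - dens mu la E * phi (rest A la E)).
  set (sg := fun E => if Rle_dec 0 (X E) then 1 else -1).
  set (m := fun E F => sg E * rest A mu E F + (- (sg E * dens mu la E)) * rest A la E F).
  assert (Hm : forall E, In E p -> ba A (m E)). { intros E HE. apply ba_comb; apply (ba_rest HA); auto. apply Hla. }
  set (Th := fun F => lsum (fun E => m E F) p).
  assert (HTh : ba A Th) by (apply ba_lsum; auto).
  assert (E1 : lsum (fun E => Rabs (X E)) p = phi Th).
  { unfold Th. rewrite phi_lsum; auto. apply lsum_ext. intros E HE. unfold m. rewrite Hlin.
    unfold sg, X. destruct (Rle_dec 0 _); [rewrite Rabs_right by lra|rewrite Rabs_left by lra]; ring.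
    apply (ba_rest HA); auto. apply (ba_rest HA); auto. apply Hla. }
  change (lsum (fun E => Rabs (X E)) p <= C * sqrt (la (@full Omega) * eta)). rewrite E1.
  eapply Rle_trans; [apply Rle_abs|]. eapply Rle_trans; [apply HC; auto|]. apply Rmult_le_compat_l; auto.
  apply (tvq HA (p := p)); auto. split; auto.
  intros s Hs Hr. eapply Rle_trans; [|apply (good_L1 HA Hla Hg Hs Hr)].
  destruct Hs as [S1 [S2 S3]].
  assert (Hc : const_on s (fun x => Rabs (psf s (dens mu la) x - psf p (dens mu la) x))).
  { intros Cc HC' x y Cx Cy. destruct (Hr Cc HC') as [E0 [HE0 HCE]].
    rewrite (psf_at _ _ _ _ S2 HC' Cx), (psf_at _ _ _ _ S2 HC' Cy), (psf_at _ _ _ _ P2 HE0 (HCE x Cx)), (psf_at _ _ _ _ P2 HE0 (HCE y Cy)); auto. }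
  rewrite (FL HA (proj1 Hla) (simple_psf2 HA mu la (fun a b => Rabs (a - b)) (conj P1 (conj P2 P3)) (conj S1 (conj S2 S3))) (conj S1 (conj S2 S3)) Hc).
  apply lsum_le. intros Cc HC'.
  destruct (classic (exists x, Cc x)) as [[x Cx]|Hno].
  - destruct (Hr Cc HC') as [E0 [HE0 HCE]].
    rewrite (fval_at _ Cc x Cx). 2:{ intros y Cy; apply (Hc Cc HC'); auto. }
    rewrite (psf_at _ _ _ _ S2 HC' Cx), (psf_at _ _ _ _ P2 HE0 (HCE x Cx)).
    assert (ACc : A Cc) by auto.
    unfold Th, m. rewrite lsum_plus.
    rewrite (lsum_ext (fun E => sg E * rest A mu E Cc) (fun E => sg E * mu (inter Cc E))).
    rewrite (lsum_ext (fun E => - (sg E * dens mu la E) * rest A la E Cc) (fun E => (- (sg E * dens mu la E)) * la (inter Cc E))).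
    rewrite (cell_sum HA Hmu sg p P2 HE0 HCE), (cell_sum HA (proj1 Hla) (fun E => - (sg E * dens mu la E)) p P2 HE0 HCE).
    rewrite <- (dens_mul la Hmu Hd Cc).
    replace (sg E0 * (la Cc * dens mu la Cc) + - (sg E0 * dens mu la E0) * la Cc) with (sg E0 * (la Cc * (dens mu la Cc - dens mu la E0))) by ring.
    rewrite Rabs_mult, Rabs_mult. assert (Rabs (sg E0) = 1). unfold sg; destruct (Rle_dec 0 _); unfold Rabs; destruct (Rcase_abs _); lra.
    rewrite H. rewrite (Rabs_right (la Cc)). lra. apply Rle_ge, Hla; auto.
    intros E _. unfold rest. destruct (excluded_middle_informative (A Cc)); [auto|contradiction].
    intros E _. unfold rest. destruct (excluded_middle_informative (A Cc)); [auto|contradiction].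
  - rewrite (ba_pointless HA HTh), (ba_pointless HA (proj1 Hla)). rewrite Rabs_R0; lra.
    intros x Cx; apply Hno; eauto. intros x Cx; apply Hno; eauto.
Qed.

End Bounded.
End Phi.
Section Main.
Variable Omega : Type.
Variable A : (Omega -> Prop) -> Prop.
Hypothesis HA : algebra A.
Local Notation T := (Omega -> Prop).
Local Notation fullO := (@full Omega).
Variable phi : (T -> R) -> R.
Hypothesis Hlin : linear_on_ba A phi.

Lemma ba_scale mu t : ba A mu -> ba A (fun E => t * mu E).
Proof. intro H. replace (fun E => t * mu E) with (fun E => t * mu E + 0 * mu E). apply ba_comb; auto.
  apply functional_extensionality; intro; ring. Qed.
Lemma ba_sub mu nu : ba A mu -> ba A nu -> ba A (fun E => nu E - mu E).
Proof. intros. replace (fun E => nu E - mu E) with (fun E => 1 * nu E + (-1) * mu E). apply ba_comb; auto.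
  apply functional_extensionality; intro; ring. Qed.

Lemma integ_add mu f g : ba A mu -> simple A f -> simple A g -> integ mu (fun x => f x + g x) = integ mu f + integ mu g.
Proof. intros. replace (fun x => f x + g x) with (fun x => 1 * f x + 1 * g x). rewrite (integ_lin HA 1 1); auto. ring.
  apply functional_extensionality; intro; ring. Qed.
Lemma integ_sub mu f g : ba A mu -> simple A f -> simple A g -> integ mu (fun x => f x - g x) = integ mu f - integ mu g.
Proof. intros. replace (fun x => f x - g x) with (fun x => 1 * f x + (-1) * g x). rewrite (integ_lin HA 1 (-1)); auto. ring.
  apply functional_extensionality; intro; ring. Qed.

Lemma level_A h y : simple A h -> A (fun x => h x = y).
Proof. intro H; apply H. Qed.

Lemma meas_mono l0 l1 h : pos A l0 -> pos A l1 -> (forall E, A E -> l0 E <= l1 E) -> simple A h -> (forall x, 0 <= h x) ->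
  integ l0 h <= integ l1 h.
Proof. intros H0 H1 Hle Hs Hn. apply integ_mono_meas. intro y. destruct (Rle_dec 0 y).
  apply Rmult_le_compat_l; auto. apply Hle, level_A; auto.
  assert (pointless (fun x => h x = y)) by (intros x Hx; specialize (Hn x); lra).
  rewrite (ba_pointless HA (proj1 H0) H), (ba_pointless HA (proj1 H1) H). lra. Qed.

Lemma tv_level nu l0 h : ba A nu -> pos A l0 -> dom A nu l0 -> simple A h -> (forall x, 0 <= h x) ->
  integ (tv A nu) h <= integ l0 h.
Proof. intros Hn H0 Hd Hs Hp. apply integ_mono_meas. intro y.
  assert (HS : A (fun x => h x = y)) by (apply level_A; auto).
  pose proof (tv_dom HA (fun x => h x = y) H0 Hd HS).
  destruct (Rle_dec 0 y). apply Rmult_le_compat_l; auto.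
  assert (pointless (fun x => h x = y)) by (intros x Hx; specialize (Hp x); lra).
  rewrite (ba_pointless HA (proj1 H0) H1) in *. destruct (sumabs_bounded HA Hn) as [b Hb].
  assert (0 <= tv A nu (fun x => h x = y)). apply (@tv_nonneg _ A nu _ b). intros; apply (Hb (fun x => h x = y)); auto.
  assert (tv A nu (fun x => h x = y) = 0) by lra. rewrite H3. lra. Qed.

Section Bnd.
Variable C : R.
Hypothesis HC0 : 0 <= C.
Hypothesis HC : forall mu, ba A mu -> Rabs (phi mu) <= C * ba_norm A mu.

Definition kd (la : T -> R) := dens (tau A phi la) la.

Lemma tau_ba la : pos A la -> ba A (tau A phi la).
Proof. intro. apply (ba_tau HA Hlin HC0 HC); auto. Qed.
Lemma tau_d la : pos A la -> forall E, A E -> Rabs (tau A phi la E) <= C * la E.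
Proof. intro. apply (tau_dom HA phi HC0 HC); auto. Qed.

Lemma kd_mul la E : pos A la -> la E * kd la E = tau A phi la E.
Proof. intro Hl. apply (dens_mul la (tau_ba Hl) (tau_d Hl)). Qed.

Lemma psf_simple p g : part A p -> simple A (psf p g).
Proof. intro; apply (simple_psf HA); auto. Qed.

Lemma L1_close l0 la p s eta : pos A l0 -> pos A la -> (forall E, A E -> l0 E <= la E) ->
  good A (tau A phi la) la p eta -> part A s -> refines s p ->
  integ l0 (fun x => Rabs (psf p (kd la) x - psf s (kd la) x)) <= sqrt (l0 fullO * eta).
Proof. intros H0 Hl Hle [Hp Hg] Hs Hr. apply le_sqrt_of_sq.
  apply (integ_nonneg HA); auto. apply (simple_comb HA (fun a b => Rabs (a - b))); apply psf_simple; auto. intro; apply Rabs_pos.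
  eapply Rle_trans. apply (integ_CS HA H0 (simple_comb HA Rminus (psf_simple (kd la) Hp) (psf_simple (kd la) Hs))).
  apply Rmult_le_compat_l. apply H0, A_full; auto.
  eapply Rle_trans; [|apply (Hg s Hs Hr)]. unfold Dsq.
  replace (fun x => (psf s (dens (tau A phi la) la) x - psf p (dens (tau A phi la) la) x) * (psf s (dens (tau A phi la) la) x - psf p (dens (tau A phi la) la) x))
    with (fun x => (psf p (kd la) x - psf s (kd la) x) * (psf p (kd la) x - psf s (kd la) x)).
  apply meas_mono; auto. apply (simple_comb HA (fun a b => (a - b) * (a - b))); apply psf_simple; auto.
  intro; apply Rle_0_sqr. apply functional_extensionality; intro x; unfold kd; ring.
Qed.

Lemma CROSS_meas l0 la lb rho eta : pos A l0 -> pos A la -> pos A lb ->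
  (forall E, A E -> l0 E <= la E) -> (forall E, A E -> la E <= lb E) ->
  good A la lb rho eta ->
  integ l0 (fun x => Rabs (psf rho (kd la) x - psf rho (kd lb) x)) <= C * sqrt (lb fullO * eta).
Proof. intros H0 Ha Hb H0a Hab Hg. pose proof (proj1 Hg) as Hp.
  assert (Hs : simple A (fun x => Rabs (psf rho (kd la) x - psf rho (kd lb) x))).
  { apply (simple_comb HA (fun a b => Rabs (a - b))); apply psf_simple; auto. }
  eapply Rle_trans. apply (meas_mono H0 Ha H0a Hs). intro; apply Rabs_pos.
  assert (Hd : forall E, A E -> Rabs (la E) <= 1 * lb E).
  { intros E HE. rewrite Rabs_right, Rmult_1_l. auto. apply Rle_ge, Ha; auto. }
  eapply Rle_trans; [|apply (CROSS HA Hlin HC0 HC (proj1 Ha) Hb Hd Hg)].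
  destruct Hp as [P1 [P2 P3]].
  assert (Hc : const_on rho (fun x => Rabs (psf rho (kd la) x - psf rho (kd lb) x))).
  { intros E HE x y Ex Ey. rewrite !(psf_at rho _ E x P2 HE Ex), !(psf_at rho _ E y P2 HE Ey). auto. }
  rewrite (FL HA (proj1 Ha) Hs (conj P1 (conj P2 P3)) Hc). apply lsum_le. intros E HE.
  destruct (classic (exists x, E x)) as [[x Ex]|Hno].
  - rewrite (fval_at _ E x Ex). 2:{ intros y Ey; apply (Hc E HE); auto. }
    rewrite !(psf_at rho _ E x P2 HE Ex).
    assert (AE : A E) by auto.
    assert (e1 : phi (rest A la E) = la E * kd la E).
    { rewrite (kd_mul E Ha). unfold tau; destruct (excluded_middle_informative (A E)); [auto|contradiction]. }
    assert (e2 : phi (rest A lb E) = lb E * kd lb E).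
    { rewrite (kd_mul E Hb). unfold tau; destruct (excluded_middle_informative (A E)); [auto|contradiction]. }
    assert (e3 : dens la lb E * lb E = la E) by (rewrite Rmult_comm; apply (dens_mul lb (proj1 Ha) Hd E)).
    rewrite e1, e2. replace (la E * kd la E - dens la lb E * (lb E * kd lb E)) with (la E * (kd la E - kd lb E))
      by (rewrite <- e3; ring).
    rewrite Rabs_mult, (Rabs_right (la E)). lra. apply Rle_ge, Ha; auto.
  - rewrite (ba_pointless HA (proj1 Ha)). rewrite Rmult_0_l. apply Rabs_pos. intros x Ex; apply Hno; eauto.
Qed.

Lemma limit_term nu la rho eta : ba A nu -> pos A la -> (forall E, A E -> Rabs (nu E) <= 1 * la E) ->
  good A nu la rho eta ->
  Rabs (integ nu (psf rho (kd la)) - phi nu) <= C * sqrt (la fullO * eta).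
Proof. intros Hn Hl Hd Hg. pose proof (proj1 Hg) as Hp. destruct Hp as [P1 [P2 P3]].
  eapply Rle_trans; [|apply (CROSS HA Hlin HC0 HC Hn Hl Hd Hg)].
  rewrite (FL HA Hn (psf_simple (kd la) (conj P1 (conj P2 P3))) (conj P1 (conj P2 P3)) (const_psf rho (kd la) P2)).
  replace (phi nu) with (phi (fun F => lsum (fun E => rest A nu E F) rho)).
  rewrite (phi_lsum Hlin). rewrite <- lsum_minus. eapply Rle_trans; [apply lsum_abs|]. apply lsum_le.
  intros E HE. assert (AE : A E) by auto.
  replace (nu E * fval (psf rho (kd la)) E) with (dens nu la E * phi (rest A la E)).
  rewrite Rabs_minus_sym; lra.
  destruct (classic (exists x, E x)) as [[x Ex]|Hno].
  - rewrite (fval_at _ E x Ex). rewrite (psf_at rho _ E x P2 HE Ex).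
    rewrite <- (dens_mul la Hn Hd E). replace (phi (rest A la E)) with (tau A phi la E).
    rewrite <- (kd_mul E Hl). ring. unfold tau; destruct (excluded_middle_informative (A E)); [auto|contradiction].
    intros y Ey. rewrite (psf_at rho _ E x P2 HE Ex), (psf_at rho _ E y P2 HE Ey); auto.
  - rewrite (ba_pointless HA Hn). unfold dens. destruct (Req_dec_T (la E) 0). ring.
    exfalso; apply n. apply (ba_pointless HA (proj1 Hl)). all: intros x Ex; apply Hno; eauto.
  - intros E HE. apply (ba_rest HA); auto.
  - f_equal. apply functional_extensionality; intro F. unfold rest. destruct (classic (A F)) as [HF|HF].
    + rewrite (ba_sum HA Hn F (conj P1 (conj P2 P3)) HF). apply lsum_ext. intros E _.
      destruct (excluded_middle_informative (A F)); [auto|contradiction].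
    + rewrite (ba_out Hn _ HF). apply lsum_zero. intros E _. destruct (excluded_middle_informative (A F)); [contradiction|auto].
Qed.

End Bnd.
End Main.
Lemma tri a b c : Rabs (a - c) <= Rabs (a - b) + Rabs (b - c).
Proof. replace (a - c) with ((a - b) + (b - c)) by ring. apply Rabs_triang. Qed.

Lemma num1 L e : 0 <= L -> 0 < e -> sqrt (L * (e * e / (L + 1))) <= e.
Proof. intros HL He. apply Rle_trans with (sqrt (e * e)); [|rewrite sqrt_square; lra]. apply sqrt_le_1_alt.
  assert (L * (e * e / (L + 1)) = (e * e) * (L / (L + 1))) by (field; lra). rewrite H.
  assert (L / (L + 1) <= 1). { apply Rmult_le_reg_r with (L + 1). lra. unfold Rdiv. rewrite Rmult_assoc, Rinv_l; lra. }
  assert (0 <= e * e) by nra. nra. Qed.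

Lemma num2 L K e : 0 <= L -> 0 <= K -> 0 < e -> K * sqrt (L * ((e / (K + 1)) * (e / (K + 1)) / (L + 1))) <= e.
Proof. intros HL HK He. assert (0 < e / (K + 1)) by (apply Rdiv_lt_0_compat; lra).
  pose proof (num1 HL H). apply Rle_trans with (K * (e / (K + 1))). apply Rmult_le_compat_l; auto.
  assert (K * (e / (K + 1)) = e * (K / (K + 1))) by (field; lra). rewrite H1.
  assert (K / (K + 1) <= 1). { apply Rmult_le_reg_r with (K + 1). lra. unfold Rdiv. rewrite Rmult_assoc, Rinv_l; lra. }
  nra. Qed.

Lemma sqrt_mono_mul L d1 d0 : 0 <= L -> d1 <= d0 -> sqrt (L * d1) <= sqrt (L * d0).
Proof. intros. apply sqrt_le_1_alt. apply Rmult_le_compat_l; auto. Qed.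

Lemma pos_eta L e : 0 <= L -> 0 < e -> 0 < e * e / (L + 1).
Proof. intros. apply Rdiv_lt_0_compat; nra. Qed.

Section Net.
Variable Omega : Type.
Variable A : (Omega -> Prop) -> Prop.
Hypothesis HA : algebra A.
Local Notation T := (Omega -> Prop).
Local Notation fullO := (@full Omega).
Variable phi : (T -> R) -> R.
Hypothesis Hlin : linear_on_ba A phi.
Variable C : R.
Hypothesis HC0 : 0 <= C.
Hypothesis HC : forall mu, ba A mu -> Rabs (phi mu) <= C * ba_norm A mu.

Definition Dt := {q : (T -> R) * R | pos A (fst q) /\ 0 < snd q}.
Definition lamd (a : Dt) := fst (proj1_sig a).
Definition deld (a : Dt) := snd (proj1_sig a).
Lemma lamd_pos a : pos A (lamd a). Proof. exact (proj1 (proj2_sig a)). Qed.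
Lemma deld_pos a : 0 < deld a. Proof. exact (proj2 (proj2_sig a)). Qed.
Definition led (a b : Dt) := (forall E, A E -> lamd a E <= lamd b E) /\ deld b <= deld a.

Definition pid (a : Dt) := epsilon (inhabits nil) (fun p => good A (tau A phi (lamd a)) (lamd a) p (deld a)).
Lemma pid_good a : good A (tau A phi (lamd a)) (lamd a) (pid a) (deld a).
Proof. unfold pid. apply epsilon_spec.
  destruct (good_exists HA (tau_ba HA Hlin HC0 HC (lamd_pos a)) (lamd_pos a) HC0 (tau_d HA phi HC0 HC (lamd_pos a))
     (deld_pos a) (part_full HA)) as [p [_ Hp]]. eauto. Qed.
Lemma pid_part a : part A (pid a). Proof. exact (proj1 (pid_good a)). Qed.

Definition fnet (a : Dt) : Omega -> R := psf (pid a) (kd A phi (lamd a)).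

Lemma fnet_simple a : simple A (fnet a).
Proof. apply (simple_psf HA), pid_part. Qed.
Lemma fnet_bound a x : Rabs (fnet a x) <= C.
Proof. apply (psf_bound (tau A phi (lamd a)) (lamd_pos a) HC0 (tau_d HA phi HC0 HC (lamd_pos a))). apply pid_part. Qed.

Lemma pos_zero : pos A (fun _ => 0).
Proof. split. apply ba_zero. intros; lra. Qed.
Lemma pos_add la lb : pos A la -> pos A lb -> pos A (fun E => la E + lb E).
Proof. intros Ha Hb. split. replace (fun E => la E + lb E) with (fun E => 1 * la E + 1 * lb E).
  apply ba_comb; [apply Ha|apply Hb]. apply functional_extensionality; intro; ring.
  intros E HE. pose proof (proj2 Ha E HE); pose proof (proj2 Hb E HE); lra. Qed.

Lemma led_directed : directed led.
Proof. split; [|split; [|split]].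
  - constructor. exists ((fun _ => 0), 1). split. apply pos_zero. simpl; lra.
  - intro a; split; [intros; lra|lra].
  - intros a b c [H1 H2] [H3 H4]. split; [|lra]. intros E HE; specialize (H1 E HE); specialize (H3 E HE); lra.
  - intros a b. set (lc := fun E => lamd a E + lamd b E). set (dc := Rmin (deld a) (deld b)).
    assert (Hc : pos A (fst (lc, dc)) /\ 0 < snd (lc, dc)). { split. apply pos_add; apply lamd_pos.
      simpl. unfold dc. apply Rmin_glb_lt; apply deld_pos. }
    exists (exist _ (lc, dc) Hc). split; split; unfold lamd, deld; simpl.
    + intros E HE. unfold lc. pose proof (proj2 (lamd_pos b) E HE). unfold lamd in *. lra.
    + apply Rmin_l.
    + intros E HE. unfold lc. pose proof (proj2 (lamd_pos a) E HE). unfold lamd in *. lra.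
    + apply Rmin_r.
Qed.

Lemma good_meas la lb p0 eta : pos A la -> pos A lb -> (forall E, A E -> la E <= lb E) -> 0 < eta -> part A p0 ->
  exists rho, refines rho p0 /\ good A la lb rho eta.
Proof. intros Ha Hb Hab He Hp. apply (good_exists HA (K := 1) (proj1 Ha) Hb Rle_0_1); auto.
  intros E HE. rewrite Rabs_right, Rmult_1_l; auto. apply Rle_ge, Ha; auto. Qed.

Lemma abs_simple f g : simple A f -> simple A g -> simple A (fun x => Rabs (f x - g x)).
Proof. intros. apply (simple_comb HA (fun a b => Rabs (a - b))); auto. Qed.

Lemma net_cauchy nu : ba A nu -> net_cauchy_L1 A led nu fnet.
Proof. intros Hn eps Heps. destruct (dom_exists HA Hn) as [l0 [H0 Hd0]].
  assert (HL0 : 0 <= l0 fullO) by (apply H0, A_full; auto).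
  set (e8 := eps / 8). assert (He8 : 0 < e8) by (unfold e8; lra).
  set (d0 := e8 * e8 / (l0 fullO + 1)). assert (Hd0p : 0 < d0) by (apply pos_eta; auto).
  assert (Ha0 : pos A (fst (l0, d0)) /\ 0 < snd (l0, d0)) by (split; auto).
  exists (exist _ (l0, d0) Ha0). intros a1 a2 [L1 D1] [L2 D2]. unfold lamd, deld in L1, L2, D1, D2; simpl in L1, L2, D1, D2.
  fold (lamd a1) in L1. fold (lamd a2) in L2. fold (deld a1) in D1. fold (deld a2) in D2.
  set (la := lamd a1). set (lb := lamd a2). set (lc := fun E => la E + lb E).
  assert (Ha : pos A la) by apply lamd_pos. assert (Hb : pos A lb) by apply lamd_pos.
  assert (Hc : pos A lc) by (apply pos_add; auto).
  assert (Hac : forall E, A E -> la E <= lc E) by (intros E HE; unfold lc; pose proof (proj2 Hb E HE); lra).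
  assert (Hbc : forall E, A E -> lb E <= lc E) by (intros E HE; unfold lc; pose proof (proj2 Ha E HE); lra).
  assert (HLc : 0 <= lc fullO) by (apply Hc, A_full; auto).
  set (eta := (e8 / (C + 1)) * (e8 / (C + 1)) / (lc fullO + 1)).
  assert (Heta : 0 < eta) by (apply pos_eta; auto; apply Rdiv_lt_0_compat; lra).
  destruct (good_meas Ha Hc Hac Heta (part_meet HA (pid_part a1) (pid_part a2))) as [r1 [Hr1 Hg1]].
  destruct (good_meas Hb Hc Hbc Heta (proj1 Hg1)) as [rho [Hr Hg2]].
  assert (Hg1' : good A la lc rho eta).
  { apply (good_refine HA (K := 1) (proj1 Ha) Hc) with r1; auto. intros E HE. rewrite Rabs_right, Rmult_1_l; auto. apply Rle_ge, Ha; auto.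
    apply (proj1 Hg2). }
  assert (Hrho : part A rho) by apply (proj1 Hg2).
  assert (Hr_a : refines rho (pid a1)) by (eapply refines_trans; [apply (refines_trans Hr Hr1)|apply refines_meet_l]).
  assert (Hr_b : refines rho (pid a2)) by (eapply refines_trans; [apply (refines_trans Hr Hr1)|apply refines_meet_r]).
  set (f1 := fnet a1). set (f2 := fnet a2).
  set (g1 := psf rho (kd A phi la)). set (g2 := psf rho (kd A phi lb)). set (g3 := psf rho (kd A phi lc)).
  assert (Sf1 : simple A f1) by apply fnet_simple. assert (Sf2 : simple A f2) by apply fnet_simple.
  assert (Sg1 : simple A g1) by (apply (simple_psf HA); auto). assert (Sg2 : simple A g2) by (apply (simple_psf HA); auto).
  assert (Sg3 : simple A g3) by (apply (simple_psf HA); auto).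
  apply Rle_lt_trans with (integ l0 (fun x => Rabs (f1 x - f2 x))).
  { apply (tv_level HA Hn H0 Hd0). apply abs_simple; auto. intro; apply Rabs_pos. }
  apply Rle_lt_trans with (integ l0 (fun x => (Rabs (f1 x - g1 x) + Rabs (g1 x - g3 x)) + (Rabs (g3 x - g2 x) + Rabs (g2 x - f2 x)))).
  { apply (integ_mono HA H0). apply abs_simple; auto.
    apply (simple_comb HA Rplus); apply (simple_comb HA Rplus); apply abs_simple; auto.
    intro x. cbv beta. pose proof (tri (f1 x) (g1 x) (f2 x)). pose proof (tri (g1 x) (g3 x) (f2 x)).
    pose proof (tri (g3 x) (g2 x) (f2 x)). lra. }
  rewrite (integ_add HA (proj1 H0)), (integ_add HA (proj1 H0) (abs_simple Sf1 Sg1)), (integ_add HA (proj1 H0) (abs_simple Sg3 Sg2)).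
  2,3: apply abs_simple; auto.
  2,3: apply (simple_comb HA Rplus); apply abs_simple; auto.
  assert (T1 : integ l0 (fun x => Rabs (f1 x - g1 x)) <= e8).
  { eapply Rle_trans. apply (L1_close HA H0 Ha L1 (pid_good a1) Hrho Hr_a).
    eapply Rle_trans. apply sqrt_mono_mul; eauto. apply num1; auto. }
  assert (T4 : integ l0 (fun x => Rabs (g2 x - f2 x)) <= e8).
  { replace (fun x => Rabs (g2 x - f2 x)) with (fun x => Rabs (f2 x - g2 x)) by (apply functional_extensionality; intro; apply Rabs_minus_sym).
    eapply Rle_trans. apply (L1_close HA H0 Hb L2 (pid_good a2) Hrho Hr_b).
    eapply Rle_trans. apply sqrt_mono_mul; eauto. apply num1; auto. }
  assert (T2 : integ l0 (fun x => Rabs (g1 x - g3 x)) <= e8).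
  { eapply Rle_trans. apply (CROSS_meas HA Hlin HC0 HC H0 Ha Hc L1 Hac Hg1'). apply num2; auto. }
  assert (T3 : integ l0 (fun x => Rabs (g3 x - g2 x)) <= e8).
  { replace (fun x => Rabs (g3 x - g2 x)) with (fun x => Rabs (g2 x - g3 x)) by (apply functional_extensionality; intro; apply Rabs_minus_sym).
    eapply Rle_trans. apply (CROSS_meas HA Hlin HC0 HC H0 Hb Hc L2 Hbc Hg2). apply num2; auto. }
  unfold e8 in *. lra.
Qed.

Lemma net_limit nu : ba A nu -> net_lim led (fun a => integ nu (fnet a)) (phi nu).
Proof. intros Hn eps Heps. destruct (dom_exists HA Hn) as [l0 [H0 Hd0]].
  assert (HL0 : 0 <= l0 fullO) by (apply H0, A_full; auto).
  set (e4 := eps / 4). assert (He4 : 0 < e4) by (unfold e4; lra).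
  set (d0 := e4 * e4 / (l0 fullO + 1)). assert (Hd0p : 0 < d0) by (apply pos_eta; auto).
  assert (Ha0 : pos A (fst (l0, d0)) /\ 0 < snd (l0, d0)) by (split; auto).
  exists (exist _ (l0, d0) Ha0). intros a [L1 D1]. unfold lamd, deld in L1, D1; simpl in L1, D1.
  fold (lamd a) in L1. fold (deld a) in D1. set (la := lamd a). assert (Ha : pos A la) by apply lamd_pos.
  assert (HLa : 0 <= la fullO) by (apply Ha, A_full; auto).
  assert (Hd : forall E, A E -> Rabs (nu E) <= 1 * la E) by (intros E HE; rewrite Rmult_1_l; eapply Rle_trans; [apply Hd0; auto|apply L1; auto]).
  set (eta := (e4 / (C + 1)) * (e4 / (C + 1)) / (la fullO + 1)).
  assert (Heta : 0 < eta) by (apply pos_eta; auto; apply Rdiv_lt_0_compat; lra).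
  destruct (good_exists HA Hn Ha Rle_0_1 Hd Heta (pid_part a)) as [rho [Hr Hg]].
  assert (Hrho : part A rho) by apply (proj1 Hg).
  set (g := psf rho (kd A phi la)). assert (Sg : simple A g) by (apply (simple_psf HA); auto).
  assert (Sf : simple A (fnet a)) by apply fnet_simple.
  replace (integ nu (fnet a) - phi nu) with (integ nu (fun x => fnet a x - g x) + (integ nu g - phi nu))
    by (rewrite (integ_sub HA Hn Sf Sg); ring).
  eapply Rle_lt_trans; [apply Rabs_triang|].
  assert (T1 : Rabs (integ nu (fun x => fnet a x - g x)) <= e4).
  { eapply Rle_trans. apply (integ_abs_dom HA Hn H0 Hd0). apply (simple_comb HA Rminus); auto.
    eapply Rle_trans. apply (L1_close HA H0 Ha L1 (pid_good a) Hrho Hr).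
    eapply Rle_trans. apply sqrt_mono_mul; eauto. apply num1; auto. }
  assert (T2 : Rabs (integ nu g - phi nu) <= e4).
  { eapply Rle_trans. apply (limit_term HA Hlin HC0 HC Hn Ha Hd Hg). apply num2; auto. }
  unfold e4 in *. lra.
Qed.

End Net.
Lemma lim_le x y : (forall eps, eps > 0 -> x < y + eps) -> x <= y.
Proof. intro H. apply Rnot_lt_le. intro Hlt. specialize (H ((x - y) / 2)). assert ((x - y) / 2 > 0) by lra.
  specialize (H H0). lra. Qed.

Section Final.
Variable Omega : Type.
Variable A : (Omega -> Prop) -> Prop.
Hypothesis HA : algebra A.
Local Notation T := (Omega -> Prop).
Variable phi : (T -> R) -> R.
Hypothesis Hlin : linear_on_ba A phi.

Lemma ba_norm_zero : ba_norm A (fun _ : T => 0) <= 1.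
Proof. unfold ba_norm. apply tv_le. intros l _ _ _. rewrite sumabs_lsum, lsum_zero. lra. intros; apply Rabs_R0. Qed.

Lemma backward : (exists (D : Type) (le : D -> D -> Prop) (f : D -> Omega -> R),
    directed le /\ (forall a, simple A (f a)) /\ unif_bounded f /\
    (forall mu, ba A mu -> net_cauchy_L1 A le mu f) /\
    net_limsup le (fun a => supnorm (f a)) (opnorm A phi) /\
    (forall mu, ba A mu -> net_lim le (fun a => integ mu (f a)) (phi mu))) -> norm_continuous A phi.
Proof. intros [D [le [f [Hdir [Hs [[M HM] [_ [_ Hl]]]]]]]].
  set (M0 := Rabs M). assert (HM0 : forall a x, Rabs (f a x) <= M0) by (intros; eapply Rle_trans; [apply HM|apply RRle_abs]).
  assert (HM0p : 0 <= M0) by apply Rabs_pos.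
  assert (Hbd : forall nu, ba A nu -> Rabs (phi nu) <= M0 * ba_norm A nu).
  { intros nu Hn. apply lim_le. intros eps Heps. destruct (Hl nu Hn eps Heps) as [a0 Ha0].
    specialize (Ha0 a0 (proj1 (proj2 Hdir) a0)). cbv beta in Ha0.
    pose proof (integ_sup HA Hn (Hs a0)). pose proof (supnorm_le (f a0) HM0p (HM0 a0)).
    pose proof (ba_norm_nonneg HA Hn).
    assert (supnorm (f a0) * ba_norm A nu <= M0 * ba_norm A nu) by (apply Rmult_le_compat_r; auto).
    pose proof (Rabs_triang_inv (phi nu) (integ nu (f a0))). rewrite Rabs_minus_sym in Ha0. lra. }
  intros mu Hmu eps Heps. exists (eps / (M0 + 1)). split. apply Rdiv_lt_0_compat; lra.
  intros nu Hnu Hn. rewrite <- (phi_sub Hlin Hmu Hnu). eapply Rle_lt_trans. apply Hbd, ba_sub; auto.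
  pose proof (ba_norm_nonneg HA (ba_sub Hmu Hnu)). set (n := ba_norm A (fun E => nu E - mu E)) in *.
  assert (n * (M0 + 1) < eps). { apply Rmult_lt_reg_r with (/ (M0 + 1)). apply Rinv_0_lt_compat; lra.
    rewrite Rmult_assoc, Rinv_r, Rmult_1_r by lra. exact Hn. }
  nra.
Qed.

Lemma forward_bound : norm_continuous A phi -> exists B, 0 <= B /\ forall nu, ba A nu -> Rabs (phi nu) <= B * ba_norm A nu.
Proof. intro Hnc. destruct (Hnc (fun _ => 0) (ba_zero A) 1 Rlt_0_1) as [d [Hd Hdel]].
  assert (Hd' : forall nu, ba A nu -> ba_norm A nu < d -> Rabs (phi nu) < 1).
  { intros nu Hn Hnn. specialize (Hdel nu Hn). rewrite (phi_zero Hlin), Rminus_0_r in Hdel. apply Hdel.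
    replace (fun E => nu E - 0) with nu; auto. apply functional_extensionality; intro; ring. }
  exists (2 / d). split. apply Rlt_le, Rdiv_lt_0_compat; lra.
  intros nu Hn. pose proof (ba_norm_nonneg HA Hn). set (n := ba_norm A nu) in *.
  destruct (Req_dec_T n 0) as [H0|H0].
  - rewrite H0, Rmult_0_r. destruct (Req_dec_T (phi nu) 0) as [Hp|Hp]. rewrite Hp, Rabs_R0; lra. exfalso.
    set (t := 2 / Rabs (phi nu)). assert (Hpa : 0 < Rabs (phi nu)) by (apply Rabs_pos_lt; auto).
    assert (Hnt : ba_norm A (fun E => t * nu E) < d).
    { eapply Rle_lt_trans. apply (tv_scale HA t Hn). fold n. rewrite H0, Rmult_0_r. lra. }
    specialize (Hd' _ (ba_scale t Hn) Hnt). rewrite (phi_scale Hlin t Hn), Rabs_mult in Hd'.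
    unfold t in Hd'. rewrite Rabs_right in Hd'. field_simplify in Hd'. lra. lra.
    apply Rle_ge, Rlt_le, Rdiv_lt_0_compat; lra.
  - assert (Hnp : 0 < n) by lra. set (t := d / (2 * n)). assert (Ht : 0 < t) by (apply Rdiv_lt_0_compat; lra).
    assert (Hnt : ba_norm A (fun E => t * nu E) < d).
    { eapply Rle_lt_trans. apply (tv_scale HA t Hn). fold n. rewrite Rabs_right by lra. unfold t.
      replace (d / (2 * n) * n) with (d / 2) by (field; lra). lra. }
    specialize (Hd' _ (ba_scale t Hn) Hnt). rewrite (phi_scale Hlin t Hn), Rabs_mult, (Rabs_right t) in Hd' by lra.
    unfold t in Hd'. apply Rlt_le. apply Rmult_lt_reg_l with (d / (2 * n)). apply Rdiv_lt_0_compat; lra.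
    replace (d / (2 * n) * (2 / d * n)) with 1 by (field; lra). lra.
Qed.

Definition opset := fun r => exists mu, ba A mu /\ ba_norm A mu <= 1 /\ r = Rabs (phi mu).

Lemma opnorm_lub B : 0 <= B -> (forall nu, ba A nu -> Rabs (phi nu) <= B * ba_norm A nu) -> is_lub opset (opnorm A phi).
Proof. intros HB Hb. unfold opnorm. apply epsilon_spec. destruct (completeness opset) as [m Hm].
  exists B. intros r [mu [Hmu [Hn ->]]]. eapply Rle_trans. apply Hb; auto. pose proof (ba_norm_nonneg HA Hmu). nra.
  exists (Rabs (phi (fun _ => 0))). exists (fun _ => 0). split. apply ba_zero. split; auto. apply ba_norm_zero.
  eauto. Qed.

Lemma opnorm_props B : 0 <= B -> (forall nu, ba A nu -> Rabs (phi nu) <= B * ba_norm A nu) ->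
  0 <= opnorm A phi /\ forall mu, ba A mu -> Rabs (phi mu) <= opnorm A phi * ba_norm A mu.
Proof. intros HB Hb. pose proof (opnorm_lub HB Hb) as Hl. split.
  - rewrite <- Rabs_R0. rewrite <- (phi_zero Hlin). apply Hl. exists (fun _ => 0). split. apply ba_zero. split; auto. apply ba_norm_zero.
  - intros mu Hmu. pose proof (ba_norm_nonneg HA Hmu). set (n := ba_norm A mu) in *.
    destruct (Req_dec_T n 0) as [H0|H0].
    + pose proof (Hb mu Hmu). fold n in H1. rewrite H0, Rmult_0_r in *. auto.
    + assert (0 < n) by lra. set (t := / n).
      assert (Hle : Rabs (phi (fun E => t * mu E)) <= opnorm A phi).
      { apply Hl. exists (fun E => t * mu E). split. apply ba_scale; auto. split; auto.
        eapply Rle_trans. apply (tv_scale HA t Hmu). fold n. unfold t. rewrite Rabs_right. rewrite Rinv_l; lra.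
        apply Rle_ge, Rlt_le, Rinv_0_lt_compat; lra. }
      rewrite (phi_scale Hlin t Hmu), Rabs_mult, Rabs_right in Hle. unfold t in Hle.
      apply Rmult_le_reg_l with (/ n). apply Rinv_0_lt_compat; lra.
      replace (/ n * (opnorm A phi * n)) with (opnorm A phi) by (field; lra). lra.
      apply Rle_ge, Rlt_le, Rinv_0_lt_compat; lra.
Qed.

Lemma forward : norm_continuous A phi -> exists (D : Type) (le : D -> D -> Prop) (f : D -> Omega -> R),
    directed le /\ (forall a, simple A (f a)) /\ unif_bounded f /\
    (forall mu, ba A mu -> net_cauchy_L1 A le mu f) /\
    net_limsup le (fun a => supnorm (f a)) (opnorm A phi) /\
    (forall mu, ba A mu -> net_lim le (fun a => integ mu (f a)) (phi mu)).
Proof. intro Hnc. destruct (forward_bound Hnc) as [B [HB Hb]].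
  destruct (opnorm_props HB Hb) as [HC0 HC]. pose proof (opnorm_lub HB Hb) as Hlub.
  set (C := opnorm A phi) in *.
  exists (Dt A), (@led _ A), (fnet phi).
  pose proof (led_directed A) as Hdir.
  split; [auto|split; [|split; [|split; [|split]]]].
  - intro a. apply (fnet_simple HA Hlin HC0 HC).
  - exists C. intros a x. apply (fnet_bound HA Hlin HC0 HC).
  - intros mu Hmu. apply (net_cauchy HA Hlin HC0 HC Hmu).
  - intros eps Heps. split.
    + destruct Hdir as [[a0] _]. exists a0. intros a _. eapply Rle_trans. apply (supnorm_le (fnet phi a) HC0).
      intro x; apply (fnet_bound HA Hlin HC0 HC). lra.
    + intros a0. assert (exists mu, ba A mu /\ ba_norm A mu <= 1 /\ C - eps / 2 < Rabs (phi mu)).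
      { apply NNPP; intro Hn. assert (C <= C - eps / 2). apply Hlub. intros r [mu [Hmu [Hnm ->]]].
        apply Rnot_lt_le; intro; apply Hn; eauto. lra. }
      destruct H as [mu [Hmu [Hnm Hgt]]].
      destruct (net_limit HA Hlin HC0 HC Hmu (eps := eps / 2)) as [a1 Ha1]. lra.
      destruct Hdir as [_ [_ [_ Hub]]]. destruct (Hub a0 a1) as [a [H0a H1a]].
      exists a. split; auto. specialize (Ha1 a H1a). cbv beta in Ha1.
      pose proof (integ_sup HA Hmu (fnet_simple HA Hlin HC0 HC a)).
      pose proof (supnorm_le (fnet phi a) HC0 (fnet_bound HA Hlin HC0 HC a)).
      assert (0 <= supnorm (fnet phi a)) by (apply (supnorm_lub (fnet phi a) (fnet_bound HA Hlin HC0 HC a)); left; auto).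
      pose proof (ba_norm_nonneg HA Hmu).
      assert (supnorm (fnet phi a) * ba_norm A mu <= supnorm (fnet phi a)) by nra.
      pose proof (Rabs_triang_inv (phi mu) (integ mu (fnet phi a))). rewrite Rabs_minus_sym in Ha1. lra.
  - intros mu Hmu. apply (net_limit HA Hlin HC0 HC Hmu).
Qed.

End Final.

Unset Implicit Arguments.

Theorem mainTheorem10 (Omega : Type) (A : (Omega -> Prop) -> Prop)
  (HA : algebra A) (phi : ((Omega -> Prop) -> R) -> R)
  (Hlin : linear_on_ba A phi) :
  norm_continuous A phi <->
  exists (D : Type) (le : D -> D -> Prop) (f : D -> Omega -> R),
    directed le /\
    (forall a, simple A (f a)) /\
    unif_bounded f /\
    (forall mu, ba A mu -> net_cauchy_L1 A le mu f) /\
    net_limsup le (fun a => supnorm (f a)) (opnorm A phi) /\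
    (forall mu, ba A mu -> net_lim le (fun a => integ mu (f a)) (phi mu)).
Proof. split. apply (forward HA Hlin). apply (backward HA Hlin). Qed.
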